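(* For $p,q>0$, $x\ge0$ and $0\le y<1$, with $z=\tfrac12xy$, the series below converge and $$B_{p,q}(x,y)=\frac{e^{-x/2}y^p(1-y)^q}{pB(p,q)}\sum_{j=0}^\infty y^j\frac{(p+q)_j}{(p+1)_j}M(p+q+j,p+1+j,z) =\frac{e^{x(y-1)/2}y^p(1-y)^q}{pB(p,q)}\sum_{j=0}^\infty y^j\frac{(p+q)_j}{(p+1)_j}M(1-q,p+1+j,-z).$$ Equivalently, $B_{p,q}(x,y)=\frac{e^{-x/2}y^p(1-y)^q}{pB(p,q)}\sum_{j=0}^\infty y^j\,\frac{d^j}{dz^j}M(p+q,p+1,z)$.
   Context: For $p,q>0$ and $0\le y\le 1$, $I_y(p,q)=\frac{1}{B(p,q)}\int_0^y t^{p-1}(1-t)^{q-1}\,dt$ is the regularized incomplete beta function, with $B(p,q)=\Gamma(p)\Gamma(q)/\Gamma(p+q)$. The cumulative noncentral beta distribution is $B_{p,q}(x,y)=e^{-x/2}\sum_{j=0}^\infty \frac{1}{j!}\left(\frac x2\right)^j I_y(p+j,q)$ for $x\ge0$. $M(a,b,z)=\sum_{n\ge0}\frac{(a)_n}{(b)_n}\frac{z^n}{n!}$ is Kummer's confluent hypergeometric function, and $(a)_n$ is the Pochhammer symbol. *)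

(* Defs.v *)
From Stdlib Require Import Reals Lra ClassicalEpsilon Arith Factorial.
Open Scope R_scope.

Definition improper_int (f : R -> R) (a b l : R) : Prop :=
  forall eps, 0 < eps -> exists delta, 0 < delta /\
    forall u v, a < u < a + delta -> b - delta < v < b ->
      exists pr : Riemann_integrable f u v, Rabs (RiemannInt pr - l) < eps.

Definition improper_int_inf (f : R -> R) (a l : R) : Prop :=
  forall eps, 0 < eps -> exists delta, 0 < delta /\
    forall u v, a < u < a + delta -> / delta < v ->
      exists pr : Riemann_integrable f u v, Rabs (RiemannInt pr - l) < eps.

(* "the" value satisfying P (chosen by Hilbert epsilon; meaningful when unique) *)
Definition the_real (P : R -> Prop) : R := epsilon (inhabits 0) P.

Definition Gamma (s : R) : R :=
  the_real (improper_int_inf (fun t => Rpower t (s - 1) * exp (- t)) 0).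

Definition Beta (p q : R) : R := Gamma p * Gamma q / Gamma (p + q).

Definition Ibeta (y p q : R) : R :=
  if Rle_dec y 0 then 0 else
  the_real (improper_int (fun t => Rpower t (p - 1) * Rpower (1 - t) (q - 1)) 0 y)
  / Beta p q.

Definition series (s : nat -> R) : R := the_real (infinite_sum s).

Definition ncbeta (p q x y : R) : R :=
  exp (- x / 2) *
  series (fun j => / INR (fact j) * (x / 2) ^ j * Ibeta y (p + INR j) q).

Fixpoint poch (a : R) (n : nat) : R :=
  match n with
  | O => 1
  | S m => poch a m * (a + INR m)
  end.

Definition kummerM (a b z : R) : R :=
  series (fun n => poch a n / poch b n * z ^ n / INR (fact n)).

Definition rpow (y p : R) : R := if Rle_dec y 0 then 0 else Rpower y p.

Definition deriv_seq (f : R -> R) (D : nat -> R -> R) : Prop :=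
  (forall t, D O t = f t) /\
  (forall j t, derivable_pt_lim (D j) t (D (S j) t)).

(* Main.v *)
Require Import Defs.
From Stdlib Require Import Reals Lra Lia Arith Factorial ClassicalEpsilon Classical FunctionalExtensionality.
From Coquelicot Require Import Coquelicot.
Open Scope R_scope.

Lemma the_real_eq (P : R -> Prop) l : P l -> (forall l', P l' -> l' = l) -> the_real P = l.
Proof.
  intros Hl Hu. unfold the_real. apply Hu. apply epsilon_spec. now exists l.
Qed.

Lemma series_eq s l : infinite_sum s l -> series s = l.
Proof.
  intros H. apply the_real_eq; auto. intros l' H'. eapply uniqueness_sum; eauto.
Qed.

Definition near_up (b : Rbar) (d v : R) : Prop :=
  match b with Finite b => b - d < v < b | p_infty => / d < v | m_infty => False end.

Definition imp (f : R -> R) (a : R) (b : Rbar) (l : R) : Prop :=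
  forall eps, 0 < eps -> exists delta, 0 < delta /\
    forall u v, a < u < a + delta -> near_up b delta v ->
      ex_RInt f u v /\ Rabs (RInt f u v - l) < eps.

Lemma imp_improper f a b l : imp f a (Finite b) l -> improper_int f a b l.
Proof.
  intros H eps Heps. destruct (H eps Heps) as [d [Hd H']]. exists d; split; auto.
  intros u v Hu Hv. destruct (H' u v Hu Hv) as [Hex Hl].
  exists (ex_RInt_Reals_0 _ _ _ Hex). now rewrite <- RInt_Reals.
Qed.

Lemma imp_improper_inf f a l : imp f a p_infty l -> improper_int_inf f a l.
Proof.
  intros H eps Heps. destruct (H eps Heps) as [d [Hd H']]. exists d; split; auto.
  intros u v Hu Hv. destruct (H' u v Hu Hv) as [Hex Hl].
  exists (ex_RInt_Reals_0 _ _ _ Hex). now rewrite <- RInt_Reals.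
Qed.

Lemma near_up_mono b d d' v : 0 < d' <= d -> near_up b d' v -> near_up b d v.
Proof.
  destruct b; simpl; intros Hd Hv; try tauto.
  - lra.
  - apply Rle_lt_trans with (/ d'); auto. apply Rinv_le_contravar; lra.
Qed.

Lemma pick_uv (a : R) (b : Rbar) : Rbar_lt a b -> forall d, 0 < d ->
  exists u v, a < u < a + d /\ near_up b d v /\ u < v.
Proof.
  intros Hab d Hd. destruct b as [b| |]; simpl in Hab |- *.
  - set (m := Rmin d ((b - a) / 2)).
    change (a < b) in Hab. assert (0 < m) by (unfold m; apply Rmin_glb_lt; lra).
    assert (m <= d) by apply Rmin_l. assert (m <= (b-a)/2) by apply Rmin_r.
    exists (a + m/2), (b - m/2). lra.
  - exists (a + d/2), (Rmax (/d) (a + d) + 1).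
    assert (/ d <= Rmax (/d) (a+d)) by apply Rmax_l.
    assert (a + d <= Rmax (/d) (a+d)) by apply Rmax_r. lra.
  - contradiction.
Qed.

Lemma improper_unique f a b l1 l2 : a < b ->
  improper_int f a b l1 -> improper_int f a b l2 -> l1 = l2.
Proof.
  intros Hab H1 H2. destruct (Req_dec l1 l2) as [|Hne]; auto. exfalso.
  set (e := Rabs (l1 - l2) / 2).
  assert (He : 0 < e) by (unfold e; assert (0 < Rabs (l1 - l2)) by (apply Rabs_pos_lt; intro; apply Hne; lra); lra).
  destruct (H1 e He) as [d1 [Hd1 H1']]. destruct (H2 e He) as [d2 [Hd2 H2']].
  destruct (pick_uv a (Finite b) Hab (Rmin d1 d2)) as [u [v [Hu [Hv _]]]].
  { apply Rmin_glb_lt; auto. }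
  assert (Rmin d1 d2 <= d1) by apply Rmin_l. assert (Rmin d1 d2 <= d2) by apply Rmin_r.
  simpl in Hv.
  destruct (H1' u v) as [pr1 E1]; [lra|lra|].
  destruct (H2' u v) as [pr2 E2]; [lra|lra|].
  rewrite (RiemannInt_P5 pr1 pr2) in E1.
  assert (Hfin : Rabs (l1 - l2) < 2 * e).
  { replace (l1 - l2) with (-(RiemannInt pr2 - l1) + (RiemannInt pr2 - l2)) by ring.
    eapply Rle_lt_trans; [apply Rabs_triang|]. rewrite Rabs_Ropp. lra. }
  unfold e in Hfin; lra.
Qed.

Lemma improper_inf_unique f a l1 l2 :
  improper_int_inf f a l1 -> improper_int_inf f a l2 -> l1 = l2.
Proof.
  intros H1 H2. destruct (Req_dec l1 l2) as [|Hne]; auto. exfalso.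
  set (e := Rabs (l1 - l2) / 2).
  assert (He : 0 < e) by (unfold e; assert (0 < Rabs (l1 - l2)) by (apply Rabs_pos_lt; intro; apply Hne; lra); lra).
  destruct (H1 e He) as [d1 [Hd1 H1']]. destruct (H2 e He) as [d2 [Hd2 H2']].
  destruct (pick_uv a p_infty I (Rmin d1 d2)) as [u [v [Hu [Hv _]]]].
  { apply Rmin_glb_lt; auto. }
  assert (Rmin d1 d2 <= d1) by apply Rmin_l. assert (Rmin d1 d2 <= d2) by apply Rmin_r.
  simpl in Hv.
  assert (/ d1 <= / Rmin d1 d2) by (apply Rinv_le_contravar; auto; apply Rmin_glb_lt; auto).
  assert (/ d2 <= / Rmin d1 d2) by (apply Rinv_le_contravar; auto; apply Rmin_glb_lt; auto).
  destruct (H1' u v) as [pr1 E1]; [lra|lra|].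
  destruct (H2' u v) as [pr2 E2]; [lra|lra|].
  rewrite (RiemannInt_P5 pr1 pr2) in E1.
  assert (Hfin : Rabs (l1 - l2) < 2 * e).
  { replace (l1 - l2) with (-(RiemannInt pr2 - l1) + (RiemannInt pr2 - l2)) by ring.
    eapply Rle_lt_trans; [apply Rabs_triang|]. rewrite Rabs_Ropp. lra. }
  unfold e in Hfin; lra.
Qed.

Lemma Rbar_lt_le_R (t v : R) (b : Rbar) : t <= v -> Rbar_lt v b -> Rbar_lt t b.
Proof. intros H1 H2. destruct b; simpl in *; auto; lra. Qed.

Lemma ex_RInt_in (f : R -> R) (a : R) (b : Rbar) :
  (forall t, a < t -> Rbar_lt t b -> continuous f t) ->
  forall u v, a < u -> a < v -> Rbar_lt u b -> Rbar_lt v b -> ex_RInt f u v.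
Proof.
  intros Hc u v Hu Hv Hub Hvb. apply (@ex_RInt_continuous R_CompleteNormedModule). intros t Ht.
  apply Hc.
  - assert (Rmin u v <= t) by lra. assert (a < Rmin u v) by (apply Rmin_glb_lt; auto). lra.
  - destruct (Rle_dec u v).
    + rewrite Rmax_right in Ht by lra. apply Rbar_lt_le_R with v; tauto.
    + rewrite Rmax_left in Ht by lra. apply Rbar_lt_le_R with u; tauto.
Qed.

Lemma near_up_lt b d v : near_up b d v -> Rbar_lt v b.
Proof. destruct b; simpl; tauto. Qed.

Lemma imp_exists_mono (f : R -> R) (a : R) (b : Rbar) M :
  Rbar_lt a b ->
  (forall t, a < t -> Rbar_lt t b -> continuous f t) ->
  (forall t, a < t -> Rbar_lt t b -> 0 <= f t) ->
  (forall u v, a < u -> u <= v -> Rbar_lt v b -> RInt f u v <= M) ->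
  exists l, imp f a b l.
Proof.
  intros Hab Hc Hp HM.
  set (E := fun r => exists u v, a < u /\ u <= v /\ Rbar_lt v b /\ r = RInt f u v).
  assert (HEb : bound E). { exists M. intros r [u [v [H1 [H2 [H3 ->]]]]]. now apply HM. }
  assert (HEn : exists r, E r).
  { destruct (pick_uv a b Hab 1 Rlt_0_1) as [u [v [Hu [Hv Huv]]]].
    exists (RInt f u v), u, v. repeat split; try lra. eapply near_up_lt; eauto. }
  destruct (completeness E HEb HEn) as [l [Hub Hlub]].
  exists l. intros eps Heps.
  assert (Hex : exists r, E r /\ l - eps < r).
  { apply NNPP. intro Hn.
    assert (l <= l - eps); [|lra].
    apply Hlub. intros r Hr. apply Rnot_lt_le. intro Hlt. apply Hn. now exists r. }
  destruct Hex as [r [[u0 [v0 [Hu0 [Huv0 [Hv0 ->]]]]] Hr]].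
  set (d := Rmin (u0 - a) (match b with Finite b => b - v0 | _ => / (Rabs v0 + 1) end)).
  assert (Hd : 0 < d).
  { unfold d. apply Rmin_glb_lt; [lra|]. destruct b; simpl in Hv0 |- *; try lra.
    apply Rinv_0_lt_compat. pose proof (Rabs_pos v0); lra. }
  exists d. split; auto. intros u v Hu Hv.
  assert (Hd1 : d <= u0 - a) by apply Rmin_l.
  assert (Hvv0 : v0 < v).
  { assert (Hd2 := Rmin_r (u0 - a) (match b with Finite b => b - v0 | _ => / (Rabs v0 + 1) end)).
    fold d in Hd2. destruct b; simpl in Hv, Hd2; try contradiction; try lra.
    assert (/ (/ (Rabs v0 + 1)) <= / d).
    { apply Rinv_le_contravar; auto. }
    rewrite Rinv_inv in H. pose proof (Rle_abs v0). lra. }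
  assert (Hvb : Rbar_lt v b) by (eapply near_up_lt; eauto).
  assert (Hu0b : Rbar_lt u0 b) by (apply Rbar_lt_le_R with v0; auto).
  assert (Hub' : Rbar_lt u b) by (apply Rbar_lt_le_R with u0; auto; lra).
  assert (Hex : ex_RInt f u v) by (apply ex_RInt_in with a b; auto; lra).
  split; auto.
  assert (E1 : ex_RInt f u u0) by (apply ex_RInt_in with a b; auto; lra).
  assert (E2 : ex_RInt f u0 v0) by (apply ex_RInt_in with a b; auto; lra).
  assert (E3 : ex_RInt f v0 v) by (apply ex_RInt_in with a b; auto; lra).
  assert (Hsplit : RInt f u v = RInt f u u0 + RInt f u0 v0 + RInt f v0 v).
  { assert (H1 := RInt_Chasles f u u0 v E1 (ex_RInt_Chasles f u0 v0 v E2 E3)).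
    assert (H2 := RInt_Chasles f u0 v0 v E2 E3).
    simpl in H1, H2. unfold plus in H1, H2; simpl in H1, H2. lra. }
  assert (0 <= RInt f u u0).
  { apply RInt_ge_0; auto; try lra. intros t Ht. apply Hp; try lra. apply Rbar_lt_le_R with u0; auto; lra. }
  assert (0 <= RInt f v0 v).
  { apply RInt_ge_0; auto; try lra. intros t Ht. apply Hp; try lra. apply Rbar_lt_le_R with v; auto; lra. }
  assert (RInt f u v <= l).
  { apply Hub. exists u, v. repeat split; auto; lra. }
  apply Rabs_def1; lra.
Qed.

Lemma RInt_scalR (f : R -> R) u v c : ex_RInt f u v -> RInt (fun t => c * f t) u v = c * RInt f u v.
Proof. intros H. exact (@RInt_scal R_CompleteNormedModule f u v c H). Qed.
Lemma ex_RInt_scalR (f : R -> R) u v c : ex_RInt f u v -> ex_RInt (fun t => c * f t) u v.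
Proof. intros H. exact (@ex_RInt_scal R_NormedModule f u v c H). Qed.
Lemma RInt_minusR (f g : R -> R) u v : ex_RInt f u v -> ex_RInt g u v -> RInt (fun t => f t - g t) u v = RInt f u v - RInt g u v.
Proof. intros H1 H2. exact (@RInt_minus R_CompleteNormedModule f g u v H1 H2). Qed.
Lemma RInt_plusR (f g : R -> R) u v : ex_RInt f u v -> ex_RInt g u v -> RInt (fun t => f t + g t) u v = RInt f u v + RInt g u v.
Proof. intros H1 H2. exact (@RInt_plus R_CompleteNormedModule f g u v H1 H2). Qed.
Lemma is_RInt_deriveR (f df : R -> R) a b : (forall x, Rmin a b <= x <= Rmax a b -> is_derive f x (df x)) ->
 (forall x, Rmin a b <= x <= Rmax a b -> continuous df x) -> RInt df a b = f b - f a.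
Proof. intros H1 H2. apply is_RInt_unique. exact (@is_RInt_derive R_CompleteNormedModule f df a b H1 H2). Qed.

Definition lim_a (phi : R -> R) (a l : R) :=
  forall eps, 0 < eps -> exists delta, 0 < delta /\ forall u, a < u < a + delta -> Rabs (phi u - l) < eps.
Definition lim_b (phi : R -> R) (b : Rbar) (l : R) :=
  forall eps, 0 < eps -> exists delta, 0 < delta /\ forall v, near_up b delta v -> Rabs (phi v - l) < eps.

Lemma small_zero X K : 0 <= K -> (forall eps, 0 < eps -> Rabs X <= eps * K) -> X = 0.
Proof.
  intros HK H. destruct (Req_dec X 0) as [|Hn]; auto. exfalso.
  assert (HX : 0 < Rabs X) by (apply Rabs_pos_lt; auto).
  set (e := Rabs X / (2 * (K + 1))).
  assert (He : 0 < e) by (unfold e; apply Rdiv_lt_0_compat; lra).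
  specialize (H e He). unfold e in H.
  assert (Rabs X / (2 * (K + 1)) * K < Rabs X).
  { apply Rmult_lt_reg_r with (2 * (K + 1)); [lra|].
    field_simplify; try lra. nra. }
  lra.
Qed.

Lemma imp_lin (f1 f2 phi : R -> R) (a : R) (b : Rbar) l1 l2 c1 c2 pa pb :
  Rbar_lt a b -> imp f1 a b l1 -> imp f2 a b l2 ->
  (forall u v, a < u -> u < v -> Rbar_lt v b ->
     c1 * RInt f1 u v + c2 * RInt f2 u v = phi v - phi u) ->
  lim_a phi a pa -> lim_b phi b pb ->
  c1 * l1 + c2 * l2 = pb - pa.
Proof.
  intros Hab H1 H2 Hid Ha Hb.
  enough (c1 * l1 + c2 * l2 - (pb - pa) = 0) by lra.
  apply small_zero with (Rabs c1 + Rabs c2 + 2).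
  { pose proof (Rabs_pos c1); pose proof (Rabs_pos c2); lra. }
  intros eps Heps.
  destruct (H1 eps Heps) as [d1 [Hd1 H1']]. destruct (H2 eps Heps) as [d2 [Hd2 H2']].
  destruct (Ha eps Heps) as [d3 [Hd3 H3']]. destruct (Hb eps Heps) as [d4 [Hd4 H4']].
  set (d := Rmin (Rmin d1 d2) (Rmin d3 d4)).
  assert (Hd : 0 < d) by (unfold d; repeat apply Rmin_glb_lt; auto).
  assert (d <= d1 /\ d <= d2 /\ d <= d3 /\ d <= d4) as [Q1 [Q2 [Q3 Q4]]].
  { unfold d. repeat split.
    - eapply Rle_trans; apply Rmin_l.
    - eapply Rle_trans; [apply Rmin_l| apply Rmin_r].
    - eapply Rle_trans; [apply Rmin_r| apply Rmin_l].
    - eapply Rle_trans; apply Rmin_r. }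
  destruct (pick_uv a b Hab d Hd) as [u [v [Hu [Hv Huv]]]].
  destruct (H1' u v) as [_ E1]; [lra| apply near_up_mono with d; auto|].
  destruct (H2' u v) as [_ E2]; [lra| apply near_up_mono with d; auto|].
  assert (E3 := H3' u ltac:(lra)).
  assert (E4 := H4' v ltac:(apply near_up_mono with d; auto)).
  rewrite <- (Rabs_Ropp (RInt f1 u v - l1)) in E1.
  rewrite <- (Rabs_Ropp (RInt f2 u v - l2)) in E2.
  assert (Hi : c1 * RInt f1 u v + c2 * RInt f2 u v = phi v - phi u).
  { apply Hid; try lra. eapply near_up_lt; eauto. }
  replace (c1 * l1 + c2 * l2 - (pb - pa)) with
    (c1 * (-(RInt f1 u v - l1)) + c2 * (-(RInt f2 u v - l2)) + (phi v - pb) - (phi u - pa))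
    by (replace (phi v) with (c1 * RInt f1 u v + c2 * RInt f2 u v + phi u) by lra; ring).
  set (A := -(RInt f1 u v - l1)) in *. set (B := -(RInt f2 u v - l2)) in *.
  eapply Rle_trans. apply Rabs_triang.
  eapply Rle_trans. apply Rplus_le_compat_r. apply Rabs_triang.
  eapply Rle_trans. apply Rplus_le_compat_r. apply Rplus_le_compat_r. apply Rabs_triang.
  unfold Rminus at 2. rewrite Rabs_Ropp, !Rabs_mult.
  pose proof (Rabs_pos c1); pose proof (Rabs_pos c2).
  assert (Rabs c1 * Rabs A <= Rabs c1 * eps) by (apply Rmult_le_compat_l; lra).
  assert (Rabs c2 * Rabs B <= Rabs c2 * eps) by (apply Rmult_le_compat_l; lra).
  change (phi u + - pa) with (phi u - pa). lra.
Qed.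

Lemma imp_le (f g : R -> R) (a : R) (b : Rbar) l1 l2 :
  Rbar_lt a b -> imp f a b l1 -> imp g a b l2 ->
  (forall t, a < t -> Rbar_lt t b -> f t <= g t) -> l1 <= l2.
Proof.
  intros Hab H1 H2 Hfg. apply Rnot_lt_le. intro Hlt.
  set (eps := (l1 - l2) / 2).
  assert (He : 0 < eps) by (unfold eps; lra).
  destruct (H1 eps He) as [d1 [Hd1 H1']]. destruct (H2 eps He) as [d2 [Hd2 H2']].
  set (d := Rmin d1 d2).
  assert (Hd : 0 < d) by (unfold d; apply Rmin_glb_lt; auto).
  assert (d <= d1) by apply Rmin_l. assert (d <= d2) by apply Rmin_r.
  destruct (pick_uv a b Hab d Hd) as [u [v [Hu [Hv Huv]]]].
  destruct (H1' u v) as [X1 E1]; [lra| apply near_up_mono with d; auto|].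
  destruct (H2' u v) as [X2 E2]; [lra| apply near_up_mono with d; auto|].
  assert (RInt f u v <= RInt g u v).
  { apply RInt_le; auto; try lra. intros t Ht. apply Hfg; try lra.
    apply Rbar_lt_le_R with v; [lra|]. eapply near_up_lt; eauto. }
  apply Rabs_def2 in E1. apply Rabs_def2 in E2. unfold eps in *. lra.
Qed.

Lemma imp_scal (f : R -> R) (a : R) (b : Rbar) l c :
  imp f a b l -> imp (fun t => c * f t) a b (c * l).
Proof.
  intros H eps Heps.
  destruct (H (eps / (Rabs c + 1))) as [d [Hd H']].
  { apply Rdiv_lt_0_compat; auto. pose proof (Rabs_pos c); lra. }
  exists d; split; auto. intros u v Hu Hv. destruct (H' u v Hu Hv) as [Hex E].
  split. { apply (ex_RInt_scalR f u v c Hex). }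
  rewrite (RInt_scalR f u v c Hex).
  replace (c * RInt f u v - c * l) with (c * (RInt f u v - l)) by ring.
  rewrite Rabs_mult. pose proof (Rabs_pos c).
  apply Rle_lt_trans with (Rabs c * (eps / (Rabs c + 1))).
  { apply Rmult_le_compat_l; lra. }
  apply Rmult_lt_reg_r with (Rabs c + 1); [lra|].
  field_simplify; try lra.
Qed.

Lemma near_up_gt (a : R) (b : Rbar) : Rbar_lt a b ->
  exists d0, 0 < d0 /\ forall d v, 0 < d <= d0 -> near_up b d v -> a + d0 < v.
Proof.
  intros Hab. destruct b as [b| |]; simpl in Hab.
  - exists ((b - a) / 2). split; [lra|]. simpl. intros d v Hd Hv. lra.
  - exists (/ (Rabs a + 1)). pose proof (Rabs_pos a). split.
    { apply Rinv_0_lt_compat; lra. }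
    simpl. intros d v Hd Hv.
    assert (/ (/ (Rabs a + 1)) <= / d) by (apply Rinv_le_contravar; lra).
    rewrite Rinv_inv in H0.
    assert (/ (Rabs a + 1) <= 1).
    { rewrite <- Rinv_1. apply Rinv_le_contravar; lra. }
    pose proof (Rle_abs a). lra.
  - destruct Hab.
Qed.

Lemma imp_ext (f g : R -> R) (a : R) (b : Rbar) l : Rbar_lt a b ->
  (forall t, a < t -> Rbar_lt t b -> f t = g t) -> imp f a b l -> imp g a b l.
Proof.
  intros Hab Hfg H eps Heps. destruct (H eps Heps) as [d [Hd H']].
  destruct (near_up_gt a b Hab) as [d0 [Hd0 Hg]].
  exists (Rmin d d0). split. { apply Rmin_glb_lt; auto. }
  assert (Rmin d d0 <= d) by apply Rmin_l. assert (Rmin d d0 <= d0) by apply Rmin_r.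
  intros u v Hu Hv.
  assert (Hav : a + d0 < v) by (apply (Hg (Rmin d d0)); auto; split; auto; apply Rmin_glb_lt; auto).
  assert (Hv' : near_up b d v) by (apply near_up_mono with (Rmin d d0); auto; split; auto; apply Rmin_glb_lt; auto).
  destruct (H' u v ltac:(lra) Hv') as [Hex E].
  assert (Hvb := near_up_lt _ _ _ Hv).
  assert (Hext : forall t, Rmin u v < t < Rmax u v -> f t = g t).
  { rewrite Rmin_left, Rmax_right in * by lra. intros t Ht. apply Hfg; try lra.
    apply Rbar_lt_le_R with v; auto; lra. }
  split.
  - eapply ex_RInt_ext; eauto.
  - rewrite <- (RInt_ext f g u v Hext). auto.
Qed.

Lemma Rmin4 d1 d2 d3 d4 : 0 < d1 -> 0 < d2 -> 0 < d3 -> 0 < d4 ->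
  exists d, 0 < d /\ d <= d1 /\ d <= d2 /\ d <= d3 /\ d <= d4.
Proof.
  intros. exists (Rmin (Rmin d1 d2) (Rmin d3 d4)). repeat split.
  - repeat apply Rmin_glb_lt; auto.
  - eapply Rle_trans; apply Rmin_l.
  - eapply Rle_trans; [apply Rmin_l| apply Rmin_r].
  - eapply Rle_trans; [apply Rmin_r| apply Rmin_l].
  - eapply Rle_trans; apply Rmin_r.
Qed.

Lemma imp_from_id (f1 f2 phi : R -> R) (a : R) (b : Rbar) l2 c1 c2 pa pb :
  Rbar_lt a b -> c1 <> 0 -> imp f2 a b l2 ->
  (forall u v, a < u -> a < v -> Rbar_lt u b -> Rbar_lt v b -> ex_RInt f1 u v) ->
  (forall u v, a < u -> u < v -> Rbar_lt v b ->
     c1 * RInt f1 u v + c2 * RInt f2 u v = phi v - phi u) ->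
  lim_a phi a pa -> lim_b phi b pb ->
  imp f1 a b ((pb - pa - c2 * l2) / c1).
Proof.
  intros Hab Hc1 H2 Hex Hid Ha Hb eps Heps.
  assert (Hc1p : 0 < Rabs c1) by (apply Rabs_pos_lt; auto).
  pose proof (Rabs_pos c2).
  set (e := eps * Rabs c1 / (Rabs c2 + 3)).
  assert (He : 0 < e) by (unfold e; apply Rdiv_lt_0_compat; [apply Rmult_lt_0_compat|]; lra).
  destruct (H2 e He) as [d2 [Hd2 H2']].
  destruct (Ha e He) as [d3 [Hd3 H3']]. destruct (Hb e He) as [d4 [Hd4 H4']].
  destruct (near_up_gt a b Hab) as [d0 [Hd0 Hg]].
  destruct (Rmin4 d0 d2 d3 d4) as [d [Hd [Q0 [Q2 [Q3 Q4]]]]]; auto.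
  exists d. split; auto. intros u v Hu Hv.
  assert (Hav : a + d0 < v) by (apply (Hg d); auto).
  assert (Hvb := near_up_lt _ _ _ Hv).
  assert (Hub : Rbar_lt u b) by (apply Rbar_lt_le_R with v; auto; lra).
  split. { apply Hex; auto; lra. }
  destruct (H2' u v) as [_ E2]; [lra| apply near_up_mono with d; auto|].
  assert (E3 := H3' u ltac:(lra)).
  assert (E4 := H4' v ltac:(apply near_up_mono with d; auto)).
  assert (Hi := Hid u v ltac:(lra) ltac:(lra) Hvb).
  assert (Heq : RInt f1 u v - (pb - pa - c2 * l2) / c1 =
     ((phi v - pb) - (phi u - pa) - c2 * (RInt f2 u v - l2)) / c1).
  { apply Rmult_eq_reg_r with c1; auto. field_simplify; auto. 
    replace (phi v) with (c1 * RInt f1 u v + c2 * RInt f2 u v + phi u) by lra. field. }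
  rewrite Heq. unfold Rdiv. rewrite Rabs_mult, Rabs_inv.
  apply Rmult_lt_reg_r with (Rabs c1); auto. rewrite Rmult_assoc, Rinv_l by lra. rewrite Rmult_1_r.
  eapply Rle_lt_trans. apply Rabs_triang.
  eapply Rle_lt_trans. apply Rplus_le_compat_r. apply Rabs_triang.
  rewrite !Rabs_Ropp, Rabs_mult.
  assert (Rabs c2 * Rabs (RInt f2 u v - l2) <= Rabs c2 * e) by (apply Rmult_le_compat_l; lra).
  assert (e * (Rabs c2 + 3) = eps * Rabs c1) by (unfold e; field; lra).
  nra.
Qed.

Lemma is_derive_multR (f g : R -> R) x df dg :
  is_derive f x df -> is_derive g x dg ->
  is_derive (fun t => f t * g t) x (df * g x + f x * dg).
Proof. intros H1 H2. apply (is_derive_mult f g x df dg H1 H2). intros; apply Rmult_comm. Qed.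

Lemma is_derive_Rpower c t : 0 < t -> is_derive (fun x => Rpower x c) t (c * Rpower t (c - 1)).
Proof. intros Ht. apply is_derive_Reals. now apply derivable_pt_lim_power. Qed.

Lemma is_derive_expm t : is_derive (fun x => exp (- x)) t (- exp (- t)).
Proof. auto_derive; auto; ring. Qed.

Lemma is_derive_Rpower_1m c t : t < 1 ->
  is_derive (fun x => Rpower (1 - x) c) t (- c * Rpower (1 - t) (c - 1)).
Proof.
  intros Ht.
  assert (H := is_derive_comp (fun x => Rpower x c) (fun x => 1 - x) t (c * Rpower (1 - t) (c - 1)) (-1)).
  simpl in H. replace (- c * Rpower (1 - t) (c - 1)) with (scal (-1) (c * Rpower (1 - t) (c - 1))).
  apply H. apply is_derive_Rpower; lra. auto_derive; auto; ring.
  unfold scal; simpl; unfold mult; simpl; ring.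
Qed.

Lemma continuous_Rpower c t : 0 < t -> continuous (fun x => Rpower x c) t.
Proof. intros Ht. apply (@ex_derive_continuous R_AbsRing R_NormedModule). eexists. now apply is_derive_Rpower. Qed.

Lemma continuous_Rpower_1m c t : t < 1 -> continuous (fun x => Rpower (1 - x) c) t.
Proof. intros Ht. apply (@ex_derive_continuous R_AbsRing R_NormedModule). eexists. now apply is_derive_Rpower_1m. Qed.

Lemma continuous_expm t : continuous (fun x => exp (- x)) t.
Proof. apply (@ex_derive_continuous R_AbsRing R_NormedModule). eexists. apply is_derive_expm. Qed.

Lemma continuous_multR (f g : R -> R) x : continuous f x -> continuous g x -> continuous (fun t => f t * g t) x.
Proof. intros; now apply (continuous_mult f g). Qed.

Lemma Rpower_pos x c : 0 < Rpower x c.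
Proof. unfold Rpower. apply exp_pos. Qed.

Lemma Rpower_lt_eps c eps u : 0 < c -> 0 < eps -> 0 < u < Rpower eps (/ c) -> Rpower u c < eps.
Proof.
  intros Hc He Hu. replace eps with (Rpower (Rpower eps (/ c)) c).
  - apply Rlt_Rpower_l; auto.
  - rewrite Rpower_mult. rewrite Rinv_l by lra. apply Rpower_1; auto.
Qed.

Definition G (s t : R) := Rpower t (s - 1) * exp (- t).

Lemma G_cont s t : 0 < t -> continuous (G s) t.
Proof. intros Ht. unfold G. apply continuous_multR. now apply continuous_Rpower. apply continuous_expm. Qed.

Lemma G_ex s u v : 0 < u -> 0 < v -> ex_RInt (G s) u v.
Proof.
  intros Hu Hv. apply (ex_RInt_in (G s) 0 p_infty); simpl; auto.
  intros t Ht _. now apply G_cont.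
Qed.

Definition phiG (s t : R) := Rpower t s * exp (- t).

Lemma G_ibp s u v : 0 < u -> 0 < v ->
  s * RInt (G s) u v + (-1) * RInt (G (s + 1)) u v = phiG s v - phiG s u.
Proof.
  intros Hu Hv.
  rewrite <- (RInt_scalR (G s)), <- (RInt_scalR (G (s+1))) by (apply G_ex; auto).
  rewrite <- RInt_plusR by (apply ex_RInt_scalR, G_ex; auto).
  apply is_RInt_deriveR.
  - intros x Hx. assert (0 < x) by (assert (0 < Rmin u v) by (apply Rmin_glb_lt; auto); lra).
    unfold phiG, G. replace (s + 1 - 1) with s by ring.
    replace (s * (Rpower x (s - 1) * exp (- x)) + -1 * (Rpower x s * exp (- x)))
      with (s * Rpower x (s - 1) * exp (- x) + Rpower x s * (- exp (- x))) by ring.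
    apply (is_derive_multR (fun t => Rpower t s) (fun t => exp (- t))). now apply is_derive_Rpower. apply is_derive_expm.
  - intros x Hx. assert (0 < x) by (assert (0 < Rmin u v) by (apply Rmin_glb_lt; auto); lra).
    apply (continuous_plus (fun t => s * G s t) (fun t => -1 * G (s+1) t)).
    + apply continuous_multR. apply continuous_const. now apply G_cont.
    + apply continuous_multR. apply continuous_const. now apply G_cont.
Qed.

Lemma phiG_lim_0 s : 0 < s -> lim_a (phiG s) 0 0.
Proof.
  intros Hs eps Heps. exists (Rpower eps (/ s)). split. apply Rpower_pos.
  intros u Hu. rewrite Rminus_0_r. unfold phiG.
  rewrite Rabs_pos_eq by (apply Rmult_le_pos; left; [apply Rpower_pos| apply exp_pos]).
  assert (exp (- u) <= 1) by (rewrite <- exp_0; left; apply exp_increasing; lra).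
  assert (Rpower u s < eps) by (apply Rpower_lt_eps; auto; lra).
  pose proof (Rpower_pos u s). nra.
Qed.

Lemma phiG_lim_inf s : 0 < s -> lim_b (phiG s) p_infty 0.
Proof.
  intros Hs eps Heps.
  set (eta := Rpower eps (/ s) / s).
  assert (Heta : 0 < eta) by (unfold eta; apply Rdiv_lt_0_compat; auto; apply Rpower_pos).
  destruct (proj2 (is_lim_spec _ _ _) is_lim_div_exp_p (/ eta)) as [M HM].
  set (N := s * (Rabs M + 1)).
  assert (HN : 0 < N) by (unfold N; pose proof (Rabs_pos M); nra).
  exists (/ N). split. { now apply Rinv_0_lt_compat. }
  simpl. intros v Hv. rewrite Rinv_inv in Hv. rewrite Rminus_0_r.
  set (w := v / s).
  assert (Hw : Rabs M + 1 < w) by (unfold w, N in *; apply Rmult_lt_reg_l with s; auto; field_simplify; lra).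
  assert (Hw0 : 0 < w) by (pose proof (Rabs_pos M); lra).
  assert (HMw : M < w) by (pose proof (Rle_abs M); lra).
  specialize (HM w HMw). simpl in HM.
  assert (Hwe : w * exp (- w) < eta).
  { rewrite exp_Ropp. apply Rmult_lt_reg_r with (exp w / w).
    - apply Rdiv_lt_0_compat; auto. apply exp_pos.
    - replace (w * / exp w * (exp w / w)) with 1 by (field; split; [lra| apply Rgt_not_eq, exp_pos]).
      apply Rmult_lt_reg_l with (/ eta). { now apply Rinv_0_lt_compat. }
      replace (/ eta * 1) with (/ eta) by ring.
      replace (/ eta * (eta * (exp w / w))) with (exp w / w) by (field; split; lra). auto. }
  assert (Hv0 : 0 < v) by (unfold w in Hw0; apply Rmult_lt_reg_r with (/ s); [apply Rinv_0_lt_compat; auto| lra]).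
  assert (Hid : phiG s v = Rpower (v * exp (- w)) s).
  { unfold phiG. rewrite <- Rpower_mult_distr; auto; [|apply exp_pos].
    f_equal. unfold Rpower. rewrite ln_exp. f_equal. unfold w. field. lra. }
  rewrite Hid. rewrite Rabs_pos_eq by (left; apply Rpower_pos).
  apply Rpower_lt_eps; auto. split.
  - apply Rmult_lt_0_compat; auto. apply exp_pos.
  - replace v with (s * w) by (unfold w; field; lra).
    replace (Rpower eps (/ s)) with (s * eta) by (unfold eta; field; lra).
    rewrite Rmult_assoc. apply Rmult_lt_compat_l; auto.
Qed.

Lemma is_derive_scalR (f : R -> R) x df c : is_derive f x df -> is_derive (fun t => c * f t) x (c * df).
Proof. intros H. exact (is_derive_scal f x c df H). Qed.

Fixpoint Hn (n : nat) (t : R) : R :=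
  match n with
  | O => - exp (- t)
  | S m => - (1 + t) ^ (S m) * exp (- t) + INR (S m) * Hn m t
  end.

Lemma Hn_deriv n t : is_derive (Hn n) t ((1 + t) ^ n * exp (- t)).
Proof.
  induction n as [|m IH]; simpl Hn.
  - auto_derive; auto. ring.
  - apply (is_derive_ext (fun t => - (1 + t) ^ (S m) * exp (- t) + INR (S m) * Hn m t)).
    { intros; reflexivity. }
    replace ((1 + t) ^ S m * exp (- t)) with
      ((- (INR (S m) * (1 + t) ^ m * exp (- t)) + (1 + t) ^ S m * exp (- t)) + INR (S m) * ((1 + t) ^ m * exp (- t)))
      by ring.
    apply (is_derive_plus (fun t => - (1 + t) ^ (S m) * exp (- t)) (fun t => INR (S m) * Hn m t)).
    + auto_derive; auto.
      replace (match m with | 0%nat => 1 | S _ => INR m + 1 end) with (INR (S m)) by reflexivity.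
      change ((1+t)^S m) with ((1+t)*(1+t)^m). ring.
    + apply is_derive_scalR. auto.
Qed.

Lemma Hn_nonpos n t : 0 <= t -> Hn n t <= 0.
Proof.
  intros Ht. induction n as [|m IH].
  - simpl. pose proof (exp_pos (- t)); lra.
  - assert (0 <= (1 + t) ^ S m) by (apply pow_le; lra).
    pose proof (exp_pos (- t)). pose proof (pos_INR (S m)).
    assert (0 <= (1 + t) ^ S m * exp (- t)) by (apply Rmult_le_pos; lra).
    assert (INR (S m) * Hn m t <= 0) by (apply Rmult_le_0_l; lra).
    change (Hn (S m) t) with (- (1 + t) ^ (S m) * exp (- t) + INR (S m) * Hn m t). nra.
Qed.

Definition Pn (n : nat) (t : R) := (1 + t) ^ n * exp (- t).

Lemma Pn_cont n t : continuous (Pn n) t.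
Proof. apply (@ex_derive_continuous R_AbsRing R_NormedModule). unfold Pn. auto_derive; auto. Qed.

Lemma RInt_Pn n u v : RInt (Pn n) u v = Hn n v - Hn n u.
Proof. apply is_RInt_deriveR; intros; [apply Hn_deriv | apply Pn_cont]. Qed.

Lemma RInt_Pn_bound n u v : 0 <= u -> u <= v -> RInt (Pn n) u v <= - Hn n 0.
Proof.
  intros Hu Huv. rewrite RInt_Pn.
  assert (Hn n 0 <= Hn n u).
  { assert (0 <= RInt (Pn n) 0 u).
    { apply RInt_ge_0; auto. apply (@ex_RInt_continuous R_CompleteNormedModule). intros; apply Pn_cont.
      intros x Hx. unfold Pn. apply Rmult_le_pos. apply pow_le; lra. left; apply exp_pos. }
    rewrite RInt_Pn in H. lra. }
  pose proof (Hn_nonpos n v ltac:(lra)). lra.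
Qed.

Lemma G_le_Pn s n t : 1 <= s -> s - 1 <= INR n -> 0 < t -> G s t <= Pn n t.
Proof.
  intros Hs Hn Ht. unfold G, Pn. apply Rmult_le_compat_r. left; apply exp_pos.
  rewrite <- Rpower_pow by lra.
  apply Rle_trans with (Rpower (1 + t) (s - 1)).
  - apply Rle_Rpower_l; lra.
  - apply Rle_Rpower; lra.
Qed.

Lemma Gamma_exists_ge1 s : 1 <= s -> exists L, imp (G s) 0 p_infty L.
Proof.
  intros Hs. destruct (INR_unbounded s) as [n Hns].
  apply (imp_exists_mono (G s) 0 p_infty (- Hn n 0)); simpl; auto.
  - intros t Ht _. now apply G_cont.
  - intros t Ht _. unfold G. apply Rmult_le_pos; left; [apply Rpower_pos|apply exp_pos].
  - intros u v Hu Huv _. apply Rle_trans with (RInt (Pn n) u v).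
    + apply RInt_le; auto. apply G_ex; lra.
      apply (@ex_RInt_continuous R_CompleteNormedModule). intros; apply Pn_cont.
      intros t Ht. apply G_le_Pn; lra.
    + apply RInt_Pn_bound; lra.
Qed.

Lemma G_succ_imp s L : 0 < s -> imp (G s) 0 p_infty L -> imp (G (s + 1)) 0 p_infty (s * L).
Proof.
  intros Hs H.
  replace (s * L) with ((0 - 0 - s * L) / (-1)) by (field).
  apply (imp_from_id (G (s+1)) (G s) (phiG s) 0 p_infty L (-1) s 0 0); simpl; auto.
  - lra.
  - intros u v Hu Hv _ _. apply G_ex; auto.
  - intros u v Hu Huv _. rewrite <- G_ibp by lra. ring.
  - now apply phiG_lim_0.
  - now apply phiG_lim_inf.
Qed.

Lemma G_pred_imp s L : 0 < s -> imp (G (s + 1)) 0 p_infty L -> imp (G s) 0 p_infty (L / s).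
Proof.
  intros Hs H.
  replace (L / s) with ((0 - 0 - (-1) * L) / s) by (field; lra).
  apply (imp_from_id (G s) (G (s+1)) (phiG s) 0 p_infty L s (-1) 0 0); simpl; auto.
  - lra.
  - intros u v Hu Hv _ _. apply G_ex; auto.
  - intros u v Hu Huv _. rewrite <- G_ibp by lra. ring.
  - now apply phiG_lim_0.
  - now apply phiG_lim_inf.
Qed.

Lemma Gamma_exists s : 0 < s -> exists L, imp (G s) 0 p_infty L.
Proof.
  intros Hs. destruct (Rle_dec 1 s). now apply Gamma_exists_ge1.
  destruct (Gamma_exists_ge1 (s + 1)) as [L HL]; [lra|].
  exists (L / s). now apply G_pred_imp.
Qed.

Lemma Gamma_of_imp s L : imp (G s) 0 p_infty L -> Gamma s = L.
Proof.
  intros H. unfold Gamma. apply the_real_eq.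
  - now apply imp_improper_inf.
  - intros l' H'. eapply improper_inf_unique; eauto. now apply imp_improper_inf.
Qed.

Lemma Gamma_imp s : 0 < s -> imp (G s) 0 p_infty (Gamma s).
Proof.
  intros Hs. destruct (Gamma_exists s Hs) as [L HL]. now rewrite (Gamma_of_imp s L HL).
Qed.

Lemma Gamma_succ s : 0 < s -> Gamma (s + 1) = s * Gamma s.
Proof.
  intros Hs. apply Gamma_of_imp. apply G_succ_imp; auto. now apply Gamma_imp.
Qed.

Lemma poch_S a n : poch a (S n) = poch a n * (a + INR n).
Proof. reflexivity. Qed.

Lemma poch_shift a n : poch a (S n) = a * poch (a + 1) n.
Proof.
  induction n as [|n IH].
  - simpl. ring.
  - rewrite poch_S, IH, poch_S, S_INR. ring.
Qed.

Lemma poch_pos a n : 0 < a -> 0 < poch a n.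
Proof.
  intros Ha. induction n as [|n IH]; simpl. lra.
  apply Rmult_lt_0_compat; auto. pose proof (pos_INR n); lra.
Qed.

Lemma poch_add a k j : poch a (k + j) = poch a k * poch (a + INR k) j.
Proof.
  induction j as [|j IH].
  - rewrite Nat.add_0_r. simpl. ring.
  - rewrite Nat.add_succ_r, !poch_S, IH, plus_INR. ring.
Qed.

Lemma Beta_succ a q : 0 < a -> 0 < q -> Beta (a + 1) q = Beta a q * (a / (a + q)).
Proof.
  intros Ha Hq. unfold Beta.
  replace (a + 1 + q) with ((a + q) + 1) by ring.
  rewrite Gamma_succ, Gamma_succ by lra.
  unfold Rdiv. rewrite !Rinv_mult. ring.
Qed.

Lemma Beta_shift p q k : 0 < p -> 0 < q ->
  Beta (p + INR k) q = Beta p q * poch p k / poch (p + q) k.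
Proof.
  intros Hp Hq. induction k as [|k IH].
  - simpl. rewrite Rplus_0_r. field.
  - rewrite S_INR. replace (p + (INR k + 1)) with ((p + INR k) + 1) by ring.
    pose proof (pos_INR k).
    rewrite Beta_succ by lra. rewrite IH, !poch_S.
    assert (0 < poch (p + q) k) by (apply poch_pos; lra).
    field. split; lra.
Qed.

Definition g (q a t : R) := Rpower t (a - 1) * Rpower (1 - t) (q - 1).
Definition phiJ (q a t : R) := Rpower t a * Rpower (1 - t) q.
Definition Jv (q y a : R) := the_real (improper_int (g q a) 0 y).

Lemma g_cont q a t : 0 < t < 1 -> continuous (g q a) t.
Proof.
  intros Ht. unfold g. apply continuous_multR.
  apply continuous_Rpower; lra. apply continuous_Rpower_1m; lra.
Qed.

Lemma g_pos q a t : 0 <= g q a t.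
Proof. unfold g. apply Rmult_le_pos; left; apply Rpower_pos. Qed.

Lemma g_ex q a y u v : y < 1 -> 0 < u -> 0 < v -> u < y -> v < y -> ex_RInt (g q a) u v.
Proof.
  intros Hy Hu Hv Huy Hvy. apply (ex_RInt_in (g q a) 0 (Finite y)); simpl; auto.
  intros t Ht Hty. apply g_cont; lra.
Qed.

Lemma Rpower_1_base x : Rpower 1 x = 1.
Proof. unfold Rpower. rewrite ln_1, Rmult_0_r. apply exp_0. Qed.

Lemma Rpower_1m_bound q y t : 0 < y < 1 -> 0 < t < y ->
  Rpower (1 - t) (q - 1) <= Rmax 1 (Rpower (1 - y) (q - 1)).
Proof.
  intros Hy Ht. destruct (Rle_dec 0 (q - 1)).
  - apply Rle_trans with 1; [|apply Rmax_l].
    apply Rle_trans with (Rpower 1 (q - 1)); [apply Rle_Rpower_l; auto; lra| rewrite Rpower_1_base; lra].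
  - apply Rle_trans with (Rpower (1 - y) (q - 1)); [|apply Rmax_r].
    replace (q - 1) with (- (1 - q)) by ring. rewrite !Rpower_Ropp.
    apply Rinv_le_contravar. apply Rpower_pos. apply Rle_Rpower_l; lra.
Qed.

Lemma RInt_Rpower a u v : 0 < a -> 0 < u -> 0 < v ->
  RInt (fun t => Rpower t (a - 1)) u v = Rpower v a / a - Rpower u a / a.
Proof.
  intros Ha Hu Hv. apply (is_RInt_deriveR (fun t => Rpower t a / a)); intros x Hx;
    assert (0 < x) by (assert (0 < Rmin u v) by (apply Rmin_glb_lt; auto); lra).
  - replace (Rpower x (a - 1)) with (/ a * (a * Rpower x (a - 1))) by (field; lra).
    apply (is_derive_ext (fun t => / a * Rpower t a)). { intros; simpl; unfold Rdiv; ring. }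
    apply is_derive_scalR. now apply is_derive_Rpower.
  - now apply continuous_Rpower.
Qed.

Lemma J_exists q y a : 0 < q -> 0 < y < 1 -> 0 < a -> exists L, imp (g q a) 0 (Finite y) L.
Proof.
  intros Hq Hy Ha. set (C := Rmax 1 (Rpower (1 - y) (q - 1))).
  assert (HC : 1 <= C) by apply Rmax_l.
  apply (imp_exists_mono (g q a) 0 (Finite y) (C / a)); simpl; try lra.
  - intros t Ht Hty. apply g_cont; lra.
  - intros t _ _. apply g_pos.
  - intros u v Hu Huv Hvy.
    apply Rle_trans with (RInt (fun t => C * Rpower t (a - 1)) u v).
    + apply RInt_le; try lra. apply g_ex with y; lra.
      apply ex_RInt_scalR. apply (@ex_RInt_continuous R_CompleteNormedModule).
      intros t Ht. apply continuous_Rpower.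
      assert (u <= Rmin u v) by (apply Rmin_glb; lra). lra.
      intros t Ht. unfold g. rewrite (Rmult_comm C). apply Rmult_le_compat_l. left; apply Rpower_pos.
      apply Rpower_1m_bound; lra.
    + rewrite RInt_scalR.
      * rewrite RInt_Rpower by lra.
        assert (Rpower v a <= 1) by (apply Rle_trans with (Rpower 1 a); [apply Rle_Rpower_l; lra| rewrite Rpower_1_base; lra]).
        pose proof (Rpower_pos u a).
        assert (Rpower v a / a - Rpower u a / a <= 1 / a).
        { unfold Rdiv. apply Rmult_le_reg_r with a; auto. field_simplify; lra. }
        unfold Rdiv in *. nra.
      * apply (@ex_RInt_continuous R_CompleteNormedModule).
        intros t Ht. apply continuous_Rpower.
        assert (u <= Rmin u v) by (apply Rmin_glb; lra). lra.
Qed.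

Lemma Jv_imp q y a : 0 < q -> 0 < y < 1 -> 0 < a -> imp (g q a) 0 (Finite y) (Jv q y a).
Proof.
  intros Hq Hy Ha. destruct (J_exists q y a Hq Hy Ha) as [L HL].
  replace (Jv q y a) with L; auto. symmetry. unfold Jv. apply the_real_eq.
  - now apply imp_improper.
  - intros l' H'. eapply improper_unique; [|eauto|]. lra. now apply imp_improper.
Qed.

Lemma cont_eps (f : R -> R) x : continuous f x -> forall eps, 0 < eps -> exists d, 0 < d /\ forall t, Rabs (t - x) < d -> Rabs (f t - f x) < eps.
Proof.
  intros Hc eps He. destruct (proj1 (filterlim_locally f (f x)) Hc (mkposreal eps He)) as [d Hd].
  exists d. split. apply cond_pos. intros t Ht. apply (Hd t). exact Ht.
Qed.

Lemma Rpower_succ t c : 0 < t -> Rpower t c = t * Rpower t (c - 1).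
Proof.
  intros Ht. replace c with ((c - 1) + 1) at 1 by ring. rewrite Rpower_plus, Rpower_1 by auto. ring.
Qed.

Lemma g_rec_id q a u v : 0 < u < 1 -> 0 < v < 1 ->
  a * RInt (g q a) u v + (- (a + q)) * RInt (g q (a + 1)) u v = phiJ q a v - phiJ q a u.
Proof.
  intros Hu Hv.
  assert (Hex : forall b, ex_RInt (g q b) u v).
  { intros b. apply (@ex_RInt_continuous R_CompleteNormedModule). intros t Ht. apply g_cont.
    assert (Rmin u v <= t <= Rmax u v) by auto.
    assert (0 < Rmin u v) by (apply Rmin_glb_lt; lra). assert (Rmax u v < 1) by (apply Rmax_lub_lt; lra). lra. }
  rewrite <- (RInt_scalR (g q a)), <- (RInt_scalR (g q (a+1))) by auto.
  rewrite <- RInt_plusR by (apply ex_RInt_scalR; auto).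
  apply is_RInt_deriveR; intros x Hx;
    (assert (0 < x < 1) by (assert (0 < Rmin u v) by (apply Rmin_glb_lt; lra);
                           assert (Rmax u v < 1) by (apply Rmax_lub_lt; lra); lra)).
  - unfold phiJ, g. replace (a + 1 - 1) with a by ring.
    replace (a * (Rpower x (a - 1) * Rpower (1 - x) (q - 1)) + - (a + q) * (Rpower x a * Rpower (1 - x) (q - 1)))
      with (a * Rpower x (a - 1) * Rpower (1 - x) q + Rpower x a * (- q * Rpower (1 - x) (q - 1))).
    + apply (is_derive_multR (fun t => Rpower t a) (fun t => Rpower (1 - t) q)).
      apply is_derive_Rpower; lra. apply is_derive_Rpower_1m; lra.
    + rewrite (Rpower_succ x a), (Rpower_succ (1 - x) q) by lra. ring.
  - apply (continuous_plus (fun t => a * g q a t) (fun t => - (a + q) * g q (a + 1) t)).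
    + apply continuous_multR. apply continuous_const. now apply g_cont.
    + apply continuous_multR. apply continuous_const. now apply g_cont.
Qed.

Lemma phiJ_lim0 q a : 0 < q -> 0 < a -> lim_a (phiJ q a) 0 0.
Proof.
  intros Hq Ha eps He. exists (Rmin (Rpower eps (/ a)) 1). split.
  { apply Rmin_glb_lt; [apply Rpower_pos| lra]. }
  intros u Hu. assert (Rmin (Rpower eps (/ a)) 1 <= Rpower eps (/ a)) by apply Rmin_l.
  assert (Rmin (Rpower eps (/ a)) 1 <= 1) by apply Rmin_r.
  rewrite Rminus_0_r. unfold phiJ.
  rewrite Rabs_pos_eq by (apply Rmult_le_pos; left; apply Rpower_pos).
  assert (Rpower (1 - u) q <= 1).
  { apply Rle_trans with (Rpower 1 q); [apply Rle_Rpower_l; lra| rewrite Rpower_1_base; lra]. }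
  assert (Rpower u a < eps) by (apply Rpower_lt_eps; auto; lra).
  pose proof (Rpower_pos u a). pose proof (Rpower_pos (1 - u) q). nra.
Qed.

Lemma phiJ_cont q a t : 0 < t < 1 -> continuous (phiJ q a) t.
Proof.
  intros Ht. unfold phiJ. apply continuous_multR.
  apply continuous_Rpower; lra. apply continuous_Rpower_1m; lra.
Qed.

Lemma phiJ_limy q a y : 0 < y < 1 -> lim_b (phiJ q a) (Finite y) (phiJ q a y).
Proof.
  intros Hy eps He. destruct (cont_eps _ _ (phiJ_cont q a y Hy) eps He) as [d [Hd H]].
  exists d. split; auto. simpl. intros v Hv. apply H. apply Rabs_def1; lra.
Qed.

Lemma J_rec q y a : 0 < q -> 0 < y < 1 -> 0 < a ->
  a * Jv q y a - (a + q) * Jv q y (a + 1) = phiJ q a y.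
Proof.
  intros Hq Hy Ha.
  replace (phiJ q a y) with (phiJ q a y - 0) by ring.
  replace (a * Jv q y a - (a + q) * Jv q y (a + 1)) with
    (a * Jv q y a + (- (a + q)) * Jv q y (a + 1)) by ring.
  apply (imp_lin (g q a) (g q (a + 1)) (phiJ q a) 0 (Finite y)); simpl; try lra.
  - apply Jv_imp; lra.
  - apply Jv_imp; lra.
  - intros u v Hu Huv Hvy. apply g_rec_id; lra.
  - now apply phiJ_lim0.
  - now apply phiJ_limy.
Qed.

Lemma J_nonneg q y a : 0 < q -> 0 < y < 1 -> 0 < a -> 0 <= Jv q y a.
Proof.
  intros Hq Hy Ha.
  apply (imp_le (fun _ => 0) (g q a) 0 (Finite y)); simpl; try lra.
  - intros eps He. exists (y / 2). split. lra. intros u v Hu Hv. split.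
    apply ex_RInt_const. rewrite RInt_const. unfold scal; simpl; unfold mult; simpl.
    rewrite Rmult_0_r, Rminus_0_r, Rabs_R0. auto.
  - apply Jv_imp; lra.
  - intros; apply g_pos.
Qed.

Lemma J_le q y a n : 0 < q -> 0 < y < 1 -> 0 < a -> Jv q y (a + INR n) <= y ^ n * Jv q y a.
Proof.
  intros Hq Hy Ha. pose proof (pos_INR n).
  apply (imp_le (g q (a + INR n)) (fun t => y ^ n * g q a t) 0 (Finite y)); simpl; try lra.
  - apply Jv_imp; lra.
  - apply imp_scal. apply Jv_imp; lra.
  - intros t Ht Hty. unfold g.
    replace (a + INR n - 1) with ((a - 1) + INR n) by ring.
    rewrite Rpower_plus, Rpower_pow by lra.
    pose proof (Rpower_pos t (a - 1)). pose proof (Rpower_pos (1 - t) (q - 1)).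
    assert (t ^ n <= y ^ n) by (apply pow_incr; lra).
    assert (0 <= Rpower t (a - 1) * Rpower (1 - t) (q - 1)) by (apply Rmult_le_pos; lra).
    nra.
Qed.

Lemma lim_inv_lin a : 0 < a -> is_lim_seq (fun n => / (a + INR n)) 0.
Proof.
  intros Ha.
  assert (H : is_lim_seq (fun n => a + INR n) p_infty).
  { eapply is_lim_seq_plus. apply is_lim_seq_const. apply is_lim_seq_INR. reflexivity. }
  apply (is_lim_seq_inv _ _ H). discriminate.
Qed.

Lemma infsum_of_lim (s : nat -> R) (l : R) : is_lim_seq (fun n => sum_f_R0 s n) l -> infinite_sum s l.
Proof.
  intros H. apply is_series_Reals. unfold is_series.
  apply (filterlim_ext (fun n => sum_f_R0 s n)).
  intros n. now rewrite sum_n_Reals. exact H.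
Qed.

Lemma lim_of_infsum (s : nat -> R) (l : R) : infinite_sum s l -> is_lim_seq (fun n => sum_f_R0 s n) l.
Proof.
  intros H. apply is_series_Reals in H. unfold is_series in H.
  unfold is_lim_seq. apply (filterlim_ext (sum_n s)).
  intros n. now rewrite sum_n_Reals. exact H.
Qed.

Lemma ex_series_leR (a b : nat -> R) : (forall n, Rabs (a n) <= b n) -> ex_series b -> ex_series a.
Proof. intros H1 H2. exact (@ex_series_le R_AbsRing R_CompleteNormedModule a b H1 H2). Qed.

Lemma ratio_lim a q y : 0 < a -> 0 < q -> 0 < y < 1 ->
  is_lim_seq (fun n => poch (a + q) n / poch a n * y ^ n) 0.
Proof.
  intros Ha Hq Hy. apply ex_series_lim_0.
  apply (ex_series_leR _ (fun n => Rabs (poch (a + q) n / poch a n * y ^ n))).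
  { intros n. apply Rle_refl. }
  apply (ex_series_DAlembert _ y). lra.
  - intros n. pose proof (poch_pos (a+q) n ltac:(lra)). pose proof (poch_pos a n Ha).
    pose proof (pow_lt y n ltac:(lra)).
    apply Rgt_not_eq. apply Rmult_lt_0_compat; auto. apply Rdiv_lt_0_compat; auto.
  - apply (is_lim_seq_ext (fun n => (1 + q * / (a + INR n)) * y)).
    + intros n. pose proof (poch_pos (a+q) n ltac:(lra)). pose proof (poch_pos a n Ha).
      pose proof (pow_lt y n ltac:(lra)). pose proof (pos_INR n).
      assert (E : poch (a + q) (S n) / poch a (S n) * y ^ S n / (poch (a + q) n / poch a n * y ^ n)
                 = (1 + q * / (a + INR n)) * y).
      { rewrite !poch_S. simpl pow. field. repeat split; lra. }
      rewrite E, Rabs_pos_eq; [reflexivity|].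
      apply Rmult_le_pos; [|lra].
      assert (0 < / (a + INR n)) by (apply Rinv_0_lt_compat; lra). nra.
    + assert (Hl : is_lim_seq (fun n => (1 + q * / (a + INR n)) * y) ((1 + q * 0) * y)).
      { apply is_lim_seq_mult'; [|apply is_lim_seq_const].
        apply is_lim_seq_plus'. apply is_lim_seq_const.
        apply is_lim_seq_mult'. apply is_lim_seq_const. now apply lim_inv_lin. }
      replace ((1 + q * 0) * y) with y in Hl by ring. exact Hl.
Qed.

Lemma phiJ_pos q a y : 0 < phiJ q a y.
Proof. unfold phiJ. apply Rmult_lt_0_compat; apply Rpower_pos. Qed.

Lemma phiJ_shift q a y k : 0 < y -> phiJ q (a + INR k) y = y ^ k * phiJ q a y.
Proof. intros Hy. unfold phiJ. rewrite Rpower_plus, Rpower_pow by auto. ring. Qed.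

Definition cJ q a j := poch (a + q) j / poch (a + 1) j.

Lemma J_partial q y a n : 0 < q -> 0 < y < 1 -> 0 < a ->
  Jv q y a = phiJ q a y / a * sum_f_R0 (fun j => cJ q a j * y ^ j) n
             + poch (a + q) (S n) / poch a (S n) * Jv q y (a + INR (S n)).
Proof.
  intros Hq Hy Ha. pose proof (J_rec q y a Hq Hy Ha) as R0.
  induction n as [|n IH].
  - simpl. unfold cJ. simpl.
    replace (a + q + 0) with (a + q) by ring.
    apply Rmult_eq_reg_l with a; [|lra].
    replace (a * (phiJ q a y / a * (1 / 1 * 1) + 1 * (a + q) / (1 * a) * Jv q y (a + 1)))
      with (phiJ q a y + (a + q) * Jv q y (a + 1)) by (field; lra).
    replace (a + 0) with a by ring. replace (a * (phiJ q a y / a * (1 / 1 * 1) + 1 * (a + q) / (1 * a) * Jv q y (a + 1))) with (phiJ q a y + (a + q) * Jv q y (a + 1)) by (field; lra). lra.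
  - rewrite IH at 1. set (b := a + INR (S n)).
    assert (Hb : 0 < b) by (unfold b; pose proof (pos_INR (S n)); lra).
    pose proof (J_rec q y b Hq Hy Hb) as Rb.
    assert (Jb : Jv q y b = phiJ q b y / b + (b + q) / b * Jv q y (b + 1)).
    { apply Rmult_eq_reg_l with b; [|lra]. field_simplify; lra. }
    rewrite Jb, tech5.
    replace (a + INR (S (S n))) with (b + 1) by (unfold b; rewrite (S_INR (S n)); ring).
    unfold b. rewrite phiJ_shift by lra. fold b.
    unfold cJ.
    pose proof (poch_pos a (S n) Ha). pose proof (poch_pos (a + 1) (S n) ltac:(lra)).
    pose proof (phiJ_pos q a y).
    assert (HA : poch a (S n) * b = a * poch (a + 1) (S n)).
    { unfold b. rewrite <- poch_S. apply poch_shift. }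
    rewrite (poch_S (a + q) (S n)), (poch_S a (S n)). fold b.
    replace (poch (a + 1) (S n)) with (poch a (S n) * b / a) by (rewrite HA; field; lra).
    replace (a + q + INR (S n)) with (b + q) by (unfold b; ring).
    field. repeat split; lra.
Qed.

Lemma J_series q y a : 0 < q -> 0 < y < 1 -> 0 < a ->
  infinite_sum (fun j => cJ q a j * y ^ j) (a * Jv q y a / phiJ q a y).
Proof.
  intros Hq Hy Ha. apply infsum_of_lim.
  pose proof (phiJ_pos q a y) as Hphi.
  set (Rm := fun n => poch (a + q) (S n) / poch a (S n) * Jv q y (a + INR (S n))).
  assert (HRm : is_lim_seq Rm 0).
  { apply (is_lim_seq_le_le (fun _ => 0) Rm
      (fun n => poch (a + q) (S n) / poch a (S n) * y ^ (S n) * Jv q y a)).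
    - intros n. unfold Rm. pose proof (poch_pos (a+q) (S n) ltac:(lra)). pose proof (poch_pos a (S n) Ha).
      assert (0 < poch (a + q) (S n) / poch a (S n)) by (apply Rdiv_lt_0_compat; auto).
      pose proof (J_nonneg q y (a + INR (S n)) Hq Hy ltac:(pose proof (pos_INR (S n)); lra)).
      pose proof (J_le q y a (S n) Hq Hy Ha). split.
      + apply Rmult_le_pos; lra.
      + rewrite Rmult_assoc. apply Rmult_le_compat_l; lra.
    - apply is_lim_seq_const.
    - replace (Finite 0) with (Finite (0 * Jv q y a)) by (f_equal; ring).
      apply is_lim_seq_mult'; [|apply is_lim_seq_const].
      apply (is_lim_seq_incr_1 (fun n => poch (a + q) n / poch a n * y ^ n)).
      now apply ratio_lim. }
  apply (is_lim_seq_ext (fun n => a / phiJ q a y * (Jv q y a - Rm n))).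
  - intros n. rewrite (J_partial q y a n Hq Hy Ha) at 1. unfold Rm. pose proof (poch_pos a (S n) Ha). field. repeat split; lra.
  - replace (Finite (a * Jv q y a / phiJ q a y)) with (Finite (a / phiJ q a y * (Jv q y a - 0)))
      by (f_equal; field; lra).
    apply is_lim_seq_mult'. apply is_lim_seq_const.
    apply is_lim_seq_minus'. apply is_lim_seq_const. auto.
Qed.

Definition kc (a b : R) (n : nat) := poch a n / poch b n / INR (fact n).

Lemma poch_abs_bound a b n : 0 < b -> Rabs (poch a n) <= (1 + Rabs a / b) ^ n * poch b n.
Proof.
  intros Hb. induction n as [|n IH].
  - simpl. rewrite Rabs_R1. lra.
  - rewrite !poch_S. simpl pow. rewrite Rabs_mult.
    pose proof (pos_INR n). pose proof (Rabs_pos a). pose proof (poch_pos b n Hb).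
    assert (Rabs (a + INR n) <= (1 + Rabs a / b) * (b + INR n)).
    { eapply Rle_trans. apply Rabs_triang. rewrite (Rabs_pos_eq (INR n)) by lra.
      assert (0 <= Rabs a / b * INR n) by (apply Rmult_le_pos; [apply Rdiv_le_0_compat|]; lra).
      replace ((1 + Rabs a / b) * (b + INR n)) with (b + INR n + Rabs a + Rabs a / b * INR n)
        by (field; lra). lra. }
    assert (0 <= (1 + Rabs a / b) ^ n) by (apply pow_le; assert (0 <= Rabs a / b) by (apply Rdiv_le_0_compat; lra); lra).
    apply Rle_trans with ((1 + Rabs a / b) ^ n * poch b n * Rabs (a + INR n)).
    + apply Rmult_le_compat_r; auto. apply Rabs_pos.
    + replace ((1 + Rabs a / b) * (1 + Rabs a / b) ^ n * (poch b n * (b + INR n)))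
        with ((1 + Rabs a / b) ^ n * poch b n * ((1 + Rabs a / b) * (b + INR n))) by ring.
      apply Rmult_le_compat_l; auto. apply Rmult_le_pos; lra.
Qed.

Lemma kc_bound a b r n : 0 < b ->
  Rabs (kc a b n * r ^ n) <= ((1 + Rabs a / b) * Rabs r) ^ n / INR (fact n).
Proof.
  intros Hb. unfold kc. pose proof (poch_pos b n Hb). pose proof (INR_fact_lt_0 n).
  rewrite !Rabs_mult, Rpow_mult_distr, <- RPow_abs.
  unfold Rdiv. rewrite !Rabs_mult, !Rabs_inv, (Rabs_pos_eq (poch b n)), (Rabs_pos_eq (INR (fact n))) by lra.
  pose proof (poch_abs_bound a b n Hb).
  pose proof (Rabs_pos (r ^ n)). rewrite <- RPow_abs in *.
  assert (0 < / poch b n) by (apply Rinv_0_lt_compat; auto).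
  assert (0 < / INR (fact n)) by (apply Rinv_0_lt_compat; auto).
  assert (Rabs (poch a n) * / poch b n <= (1 + Rabs a / b) ^ n).
  { apply Rmult_le_reg_r with (poch b n); auto. rewrite Rmult_assoc, Rinv_l by lra. lra. }
  assert (0 <= Rabs (poch a n)) by apply Rabs_pos.
  assert (0 <= Rabs (poch a n) * / poch b n) by (apply Rmult_le_pos; lra).
  replace (Rabs (poch a n) * / poch b n * / INR (fact n) * Rabs r ^ n)
    with ((Rabs (poch a n) * / poch b n) * (Rabs r ^ n * / INR (fact n))) by ring.
  replace ((1 + Rabs a * / b) ^ n * Rabs r ^ n * / INR (fact n))
    with ((1 + Rabs a * / b) ^ n * (Rabs r ^ n * / INR (fact n))) by ring.
  apply Rmult_le_compat_r; auto. apply Rmult_le_pos; lra.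
Qed.

Lemma ex_series_exp w : ex_series (fun n => w ^ n / INR (fact n)).
Proof.
  exists (exp w). pose proof (is_exp_Reals w) as H. unfold is_pseries in H.
  eapply is_series_ext; [|exact H]. intros n. simpl. rewrite pow_n_pow.
  unfold scal; simpl; unfold mult; simpl. unfold Rdiv. ring.
Qed.

Lemma exp_series_sum w : infinite_sum (fun n => w ^ n / INR (fact n)) (exp w).
Proof.
  apply is_series_Reals. pose proof (is_exp_Reals w) as H. unfold is_pseries in H.
  eapply is_series_ext; [|exact H]. intros n. simpl. rewrite pow_n_pow.
  unfold scal; simpl; unfold mult; simpl. unfold Rdiv. ring.
Qed.

Lemma exp_term_le w n : 0 <= w -> w ^ n / INR (fact n) <= exp w.
Proof.
  intros Hw. pose proof (lim_of_infsum _ _ (exp_series_sum w)) as H.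
  assert (Hinc : forall m, sum_f_R0 (fun n => w ^ n / INR (fact n)) m <= sum_f_R0 (fun n => w ^ n / INR (fact n)) (S m)).
  { intros m. rewrite tech5. assert (0 <= w ^ S m / INR (fact (S m))).
    { apply Rdiv_le_0_compat. apply pow_le; auto. apply INR_fact_lt_0. } lra. }
  pose proof (is_lim_seq_incr_compare _ _ H Hinc n).
  apply Rle_trans with (sum_f_R0 (fun n => w ^ n / INR (fact n)) n); auto.
  destruct n. simpl. lra. rewrite tech5.
  assert (0 <= sum_f_R0 (fun n => w ^ n / INR (fact n)) n).
  { apply cond_pos_sum. intros k. apply Rdiv_le_0_compat. apply pow_le; auto. apply INR_fact_lt_0. }
  lra.
Qed.

Lemma kc_radius a b x : 0 < b -> Rbar_lt (Rabs x) (CV_radius (kc a b)).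
Proof.
  intros Hb. destruct (CV_radius_bounded (kc a b)) as [Hub _].
  set (A := 1 + Rabs a / b).
  assert (HA : 0 <= A) by (unfold A; assert (0 <= Rabs a / b) by (apply Rdiv_le_0_compat; [apply Rabs_pos|lra]); lra).
  assert (HE : Rbar_le (Rabs x + 1) (CV_radius (kc a b))).
  { apply Hub. exists (exp (A * Rabs (Rabs x + 1))). intros n.
    eapply Rle_trans. apply kc_bound; auto. apply exp_term_le.
    apply Rmult_le_pos; auto. apply Rabs_pos. }
  destruct (CV_radius (kc a b)) as [r| |]; simpl in *; auto. lra.
Qed.

Lemma kummer_pseries a b z : 0 < b -> kummerM a b z = PSeries (kc a b) z.
Proof.
  intros Hb. unfold kummerM. apply series_eq. apply is_series_Reals.
  assert (H := PSeries_correct (kc a b) z (CV_radius_inside _ _ (kc_radius a b z Hb))).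
  unfold is_pseries in H. eapply is_series_ext; [|exact H]. intros n. simpl.
  rewrite pow_n_pow. unfold scal; simpl; unfold mult; simpl. unfold kc. unfold Rdiv. ring.
Qed.

Lemma kummer_sum a b z : 0 < b ->
  infinite_sum (fun n => poch a n / poch b n * z ^ n / INR (fact n)) (kummerM a b z).
Proof.
  intros Hb. rewrite kummer_pseries by auto. apply is_series_Reals.
  assert (H := PSeries_correct (kc a b) z (CV_radius_inside _ _ (kc_radius a b z Hb))).
  unfold is_pseries in H. eapply is_series_ext; [|exact H]. intros n. simpl.
  rewrite pow_n_pow. unfold scal; simpl; unfold mult; simpl. unfold kc. unfold Rdiv. ring.
Qed.

Lemma kummer_deriv a b z : 0 < b ->
  is_derive (kummerM a b) z (a / b * kummerM (a + 1) (b + 1) z).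
Proof.
  intros Hb.
  apply (is_derive_ext (PSeries (kc a b))). { intros t. now rewrite kummer_pseries. }
  rewrite kummer_pseries by lra.
  replace (a / b * PSeries (kc (a + 1) (b + 1)) z) with (PSeries (PS_derive (kc a b)) z).
  - apply is_derive_PSeries. apply kc_radius; auto.
  - rewrite <- PSeries_scal. apply PSeries_ext. intros n. unfold PS_derive, PS_scal.
    change (scal (a / b) (kc (a + 1) (b + 1) n)) with ((a / b) * kc (a + 1) (b + 1) n).
    unfold kc.
    rewrite !poch_shift. change (fact (S n)) with (S n * fact n)%nat. rewrite mult_INR.
    pose proof (poch_pos (b + 1) n ltac:(lra)). pose proof (INR_fact_lt_0 n).
    pose proof (pos_INR n). rewrite S_INR. field. repeat split; lra.
Qed.

Lemma C_n_0 n : Binomial.C n 0 = 1.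
Proof. unfold Binomial.C. rewrite Nat.sub_0_r. simpl. pose proof (INR_fact_neq_0 n). field. auto. Qed.

Lemma C_n_n n : Binomial.C n n = 1.
Proof. unfold Binomial.C. rewrite Nat.sub_diag. simpl. pose proof (INR_fact_neq_0 n). field. auto. Qed.

Lemma binom_split (f : nat -> R) N :
  sum_f_R0 (fun k => Binomial.C (S N) k * f k) (S N) =
  sum_f_R0 (fun k => Binomial.C N k * f k) N + sum_f_R0 (fun k => Binomial.C N k * f (S k)) N.
Proof.
  destruct N as [|m].
  - simpl. rewrite C_n_0, C_n_n. rewrite C_n_n. ring.
  - rewrite (decomp_sum (fun k => Binomial.C (S (S m)) k * f k) (S (S m))) by lia.
    rewrite (decomp_sum (fun k => Binomial.C (S m) k * f k) (S m)) by lia.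
    simpl pred. rewrite tech5, (tech5 (fun k => Binomial.C (S m) k * f (S k))).
    rewrite !C_n_0, !C_n_n.
    rewrite (sum_eq (fun i => Binomial.C (S (S m)) (S i) * f (S i))
                    (fun i => Binomial.C (S m) i * f (S i) + Binomial.C (S m) (S i) * f (S i))).
    + rewrite plus_sum. ring.
    + intros i Hi. rewrite <- pascal by lia. ring.
Qed.

Definition vx (a b : R) (k : nat) := (-1) ^ k * (poch a k / poch b k).
Definition vsum (n : nat) (a b : R) := sum_f_R0 (fun k => Binomial.C n k * vx a b k) n.

Lemma vx_S a b k : 0 < b -> vx a b (S k) = - (a / b) * vx (a + 1) (b + 1) k.
Proof.
  intros Hb. unfold vx. rewrite !poch_shift. simpl pow.
  pose proof (poch_pos (b + 1) k ltac:(lra)). field. split; lra.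
Qed.

Lemma vsum_rec n a b : 0 < b -> vsum (S n) a b = vsum n a b - a / b * vsum n (a + 1) (b + 1).
Proof.
  intros Hb. unfold vsum. rewrite (binom_split (vx a b) n).
  rewrite (sum_eq (fun k => Binomial.C n k * vx a b (S k)) (fun k => Binomial.C n k * vx (a + 1) (b + 1) k * (- (a / b)))).
  - rewrite <- scal_sum. ring.
  - intros i _. rewrite vx_S by auto. ring.
Qed.

Lemma vandermonde n : forall a b, 0 < b -> vsum n a b = poch (b - a) n / poch b n.
Proof.
  induction n as [|n IH]; intros a b Hb.
  - unfold vsum, vx. simpl. rewrite C_n_0. field.
  - rewrite vsum_rec by auto. rewrite IH, IH by lra.
    replace (b + 1 - (a + 1)) with (b - a) by ring.
    assert (HB : b * poch (b + 1) n = poch b n * (b + INR n)) by (rewrite <- poch_shift; apply poch_S).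
    pose proof (poch_pos b n Hb). pose proof (pos_INR n).
    replace (poch (b + 1) n) with (poch b n * (b + INR n) / b) by (rewrite <- HB; field; lra).
    rewrite !poch_S. field. repeat split; lra.
Qed.

Lemma radius_of_bound (c : nat -> R) K : 0 <= K ->
  (forall r n, Rabs (c n * r ^ n) <= (K * Rabs r) ^ n / INR (fact n)) ->
  forall x, Rbar_lt (Rabs x) (CV_radius c).
Proof.
  intros HK Hb x. destruct (CV_radius_bounded c) as [Hub _].
  assert (HE : Rbar_le (Rabs x + 1) (CV_radius c)).
  { apply Hub. exists (exp (K * Rabs (Rabs x + 1))). intros n.
    eapply Rle_trans. apply Hb. apply exp_term_le.
    apply Rmult_le_pos; auto. apply Rabs_pos. }
  destruct (CV_radius c) as [r| |]; simpl in *; auto. lra.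
Qed.

Definition ea (n : nat) := (-1) ^ n / INR (fact n).

Lemma ea_radius x : Rbar_lt (Rabs x) (CV_radius ea).
Proof.
  apply (radius_of_bound ea 1). lra. intros r n. unfold ea.
  rewrite Rmult_1_l, Rabs_mult. unfold Rdiv. rewrite Rabs_mult, Rabs_inv, pow_1_abs.
  rewrite (Rabs_pos_eq (INR (fact n))) by (left; apply INR_fact_lt_0). rewrite RPow_abs. lra.
Qed.

Lemma comm3 (x y u : R) : x * y * u = y * (x * u).
Proof. ring. Qed.

Lemma ea_pseries (z : R) : is_pseries ea z (exp (- z)).
Proof.
  pose proof (is_exp_Reals (- z)) as H. unfold is_pseries in *.
  eapply is_series_ext; [|exact H]. intros n. rewrite !pow_n_pow.
  change (scal ?x ?y) with (x * y). unfold ea.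
  replace (- z) with (-1 * z) by ring. rewrite Rpow_mult_distr. unfold Rdiv. apply comm3.
Qed.

Lemma m1_pow_sub n k : (k <= n)%nat -> (-1) ^ (n - k) = (-1) ^ n * (-1) ^ k.
Proof.
  intros Hk. replace ((-1) ^ n) with ((-1) ^ (n - k) * (-1) ^ k).
  - rewrite Rmult_assoc, <- Rpow_mult_distr. replace (-1 * -1) with 1 by ring. rewrite pow1. ring.
  - rewrite <- pow_add. f_equal. lia.
Qed.

Lemma PS_mult_kc_ea a b n : 0 < b ->
  PS_mult (kc a b) ea n = (-1) ^ n * kc (b - a) b n.
Proof.
  intros Hb. unfold PS_mult.
  rewrite (sum_eq _ (fun k => Binomial.C n k * vx a b k * ((-1) ^ n / INR (fact n)))).
  - rewrite <- scal_sum. fold (vsum n a b). rewrite vandermonde by auto.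
    unfold kc. pose proof (poch_pos b n Hb). pose proof (INR_fact_lt_0 n). field. split; lra.
  - intros k Hk. unfold kc, ea, vx, Binomial.C. rewrite m1_pow_sub by auto.
    pose proof (poch_pos b k Hb). pose proof (INR_fact_lt_0 n). pose proof (INR_fact_lt_0 k).
    pose proof (INR_fact_lt_0 (n - k)).
    replace ((-1) ^ k * (-1) ^ k) with 1.
    + field. repeat split; lra.
    + rewrite <- Rpow_mult_distr. replace (-1 * -1) with 1 by ring. now rewrite pow1.
Qed.

Lemma kummer_transform (a b z : R) : 0 < b -> kummerM (b - a) b (- z) = exp (- z) * kummerM a b z.
Proof.
  intros Hb.
  assert (H := is_pseries_mult (kc a b) ea z (kummerM a b z) (exp (- z))).
  rewrite (kummer_pseries a b z) in H |- * by auto. rewrite (kummer_pseries (b - a) b (- z)) by auto.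
  specialize (H (PSeries_correct _ _ (CV_radius_inside _ _ (kc_radius a b z Hb))) (ea_pseries z)
                (kc_radius a b z Hb) (ea_radius z)).
  rewrite Rmult_comm. apply is_pseries_unique.
  unfold is_pseries in *. eapply is_series_ext; [|exact H]. intros n. rewrite !pow_n_pow.
  change (scal ?x ?y) with (x * y). rewrite PS_mult_kc_ea by auto.
  replace (- z) with (-1 * z) by ring. rewrite Rpow_mult_distr. symmetry; apply comm3.
Qed.

Lemma psum_nonneg (f : nat -> R) n : (forall k, 0 <= f k) -> 0 <= sum_f_R0 f n.
Proof. intros H. apply cond_pos_sum. auto. Qed.

Lemma psum_le_lim (f : nat -> R) l : (forall n, 0 <= f n) -> infinite_sum f l ->
  forall n, sum_f_R0 f n <= l.
Proof.
  intros Hp H n. apply (is_lim_seq_incr_compare (fun n => sum_f_R0 f n)); auto.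
  now apply lim_of_infsum. intros m. rewrite tech5. specialize (Hp (S m)). lra.
Qed.

Lemma term_le_lim (f : nat -> R) l : (forall n, 0 <= f n) -> infinite_sum f l ->
  forall n, f n <= l.
Proof.
  intros Hp H n. apply Rle_trans with (sum_f_R0 f n); [|now apply psum_le_lim].
  destruct n. simpl; lra. rewrite tech5. pose proof (psum_nonneg f n Hp). lra.
Qed.

Lemma mono_bounded_sum (f : nat -> R) M : (forall n, 0 <= f n) -> (forall n, sum_f_R0 f n <= M) ->
  exists l, infinite_sum f l /\ l <= M.
Proof.
  intros Hp HM.
  assert (Hex : ex_finite_lim_seq (fun n => sum_f_R0 f n)).
  { apply ex_finite_lim_seq_incr with M; auto. intros n. rewrite tech5. specialize (Hp (S n)); lra. }
  pose proof (Lim_seq_correct' _ Hex) as HL.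
  destruct (ex_finite_lim_seq_correct (fun n => sum_f_R0 f n)) as [H1 _].
  destruct (H1 Hex) as [_ Hfin].
  exists (real (Lim_seq (fun n => sum_f_R0 f n))). split.
  - apply infsum_of_lim. exact HL.
  - assert (Hle := is_lim_seq_le _ (fun _ => M) _ _ HM HL (is_lim_seq_const M)).
    exact Hle.
Qed.

Lemma lim_finite_sum (u : nat -> nat -> R) (l : nat -> R) K :
  (forall k, is_lim_seq (u k) (l k)) ->
  is_lim_seq (fun m => sum_f_R0 (fun k => u k m) K) (sum_f_R0 l K).
Proof.
  intros H. induction K as [|K IH].
  - simpl. apply H.
  - simpl. apply is_lim_seq_plus'; auto.
Qed.

Lemma sum_swap (a : nat -> nat -> R) K m :
  sum_f_R0 (fun k => sum_f_R0 (a k) m) K = sum_f_R0 (fun j => sum_f_R0 (fun k => a k j) K) m.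
Proof.
  induction K as [|K IH].
  - simpl. apply sum_eq. auto.
  - simpl. rewrite IH. rewrite <- plus_sum. apply sum_eq. auto.
Qed.

Lemma fubini (a : nat -> nat -> R) (Rk : nat -> R) (L : R) :
  (forall k j, 0 <= a k j) -> (forall k, infinite_sum (a k) (Rk k)) -> infinite_sum Rk L ->
  (forall j, infinite_sum (fun k => a k j) (series (fun k => a k j))) /\
  infinite_sum (fun j => series (fun k => a k j)) L.
Proof.
  intros Hp HR HL.
  assert (HRp : forall k, 0 <= Rk k).
  { intros k. apply Rle_trans with (a k 0%nat); auto. apply (term_le_lim (a k)); auto. }
  assert (HC : forall j, infinite_sum (fun k => a k j) (series (fun k => a k j))).
  { intros j. destruct (mono_bounded_sum (fun k => a k j) L) as [l [Hl _]]; auto.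
    - intros n. apply Rle_trans with (sum_f_R0 Rk n); [|now apply psum_le_lim].
      apply sum_Rle. intros k _. apply (term_le_lim (a k)); auto.
    - now rewrite (series_eq _ _ Hl). }
  split; auto.
  set (Cj := fun j => series (fun k => a k j)).
  assert (HCp : forall j, 0 <= Cj j).
  { intros j. apply Rle_trans with (a 0%nat j); auto. apply (term_le_lim (fun k => a k j)); auto. }
  assert (HCb : forall m, sum_f_R0 Cj m <= L).
  { intros m.
    assert (Hlim : is_lim_seq (fun K => sum_f_R0 (fun k => sum_f_R0 (a k) m) K) (sum_f_R0 Cj m)).
    { apply (is_lim_seq_ext (fun K => sum_f_R0 (fun j => sum_f_R0 (fun k => a k j) K) m)).
      { intros K. symmetry. apply sum_swap. }
      apply (lim_finite_sum (fun j K => sum_f_R0 (fun k => a k j) K) Cj m).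
      intros j. apply lim_of_infsum. apply HC. }
    assert (Hle := is_lim_seq_le _ (fun K => sum_f_R0 Rk K) _ _ 
      (fun K => sum_Rle _ _ K (fun k _ => psum_le_lim (a k) (Rk k) (Hp k) (HR k) m)) Hlim (lim_of_infsum _ _ HL)).
    simpl in Hle. auto. }
  destruct (mono_bounded_sum Cj L HCp HCb) as [L' [HL' HL'le]].
  replace L with L'; auto.
  apply Rle_antisym; auto.
  assert (Hb : forall K, sum_f_R0 Rk K <= L').
  { intros K.
    assert (Hlim : is_lim_seq (fun m => sum_f_R0 (fun k => sum_f_R0 (a k) m) K) (sum_f_R0 Rk K)).
    { apply lim_finite_sum. intros k. apply lim_of_infsum. apply HR. }
    assert (Hle := is_lim_seq_le _ (fun m => sum_f_R0 Cj m) _ _ 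
      (fun m => Rle_trans _ _ _ (Req_le _ _ (sum_swap a K m))
         (sum_Rle _ _ m (fun j _ => psum_le_lim (fun k => a k j) (Cj j) (fun k => Hp k j) (HC j) K)))
      Hlim (lim_of_infsum _ _ HL')).
    simpl in Hle. auto. }
  apply Rnot_lt_le. intro Hlt.
  pose proof (lim_of_infsum _ _ HL) as HlimL.
  assert (Hle := is_lim_seq_le _ (fun _ => L') _ _ Hb HlimL (is_lim_seq_const L')).
  simpl in Hle. lra.
Qed.

Lemma Gamma_pos s : 0 < s -> 0 < Gamma s.
Proof.
  intros Hs. pose proof (Gamma_imp s Hs) as H.
  assert (HI : 0 < RInt (G s) 1 2).
  { apply RInt_gt_0; try lra.
    - intros x Hx. unfold G. apply Rmult_lt_0_compat; [apply Rpower_pos| apply exp_pos].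
    - intros x Hx. apply G_cont; lra. }
  destruct (H (RInt (G s) 1 2 / 2)) as [d [Hd Hd']]; [lra|].
  set (u := Rmin d 1 / 2). set (v := Rmax 2 (/ d) + 1).
  assert (Rmin d 1 <= d) by apply Rmin_l. assert (Rmin d 1 <= 1) by apply Rmin_r.
  assert (0 < Rmin d 1) by (apply Rmin_glb_lt; lra).
  assert (2 <= Rmax 2 (/ d)) by apply Rmax_l. assert (/ d <= Rmax 2 (/ d)) by apply Rmax_r.
  destruct (Hd' u v) as [_ E]; [unfold u; lra| simpl; unfold v; lra|].
  assert (Hsplit : RInt (G s) u v = RInt (G s) u 1 + RInt (G s) 1 2 + RInt (G s) 2 v).
  { assert (E1 : ex_RInt (G s) u 1) by (apply G_ex; unfold u; lra).
    assert (E2 : ex_RInt (G s) 1 2) by (apply G_ex; lra).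
    assert (E3 : ex_RInt (G s) 2 v) by (apply G_ex; unfold v; lra).
    assert (Hc1 := RInt_Chasles (G s) u 1 v E1 (ex_RInt_Chasles (G s) 1 2 v E2 E3)).
    assert (Hc2 := RInt_Chasles (G s) 1 2 v E2 E3).
    unfold plus in Hc1, Hc2; simpl in Hc1, Hc2. lra. }
  assert (0 <= RInt (G s) u 1).
  { apply RInt_ge_0; [unfold u; lra| apply G_ex; unfold u; lra|].
    intros t Ht. unfold G. apply Rmult_le_pos; left; [apply Rpower_pos| apply exp_pos]. }
  assert (0 <= RInt (G s) 2 v).
  { apply RInt_ge_0; [unfold v; lra| apply G_ex; unfold v; lra|].
    intros t Ht. unfold G. apply Rmult_le_pos; left; [apply Rpower_pos| apply exp_pos]. }
  apply Rabs_def2 in E. lra.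
Qed.

Lemma Beta_pos p q : 0 < p -> 0 < q -> 0 < Beta p q.
Proof.
  intros Hp Hq. unfold Beta. apply Rdiv_lt_0_compat.
  apply Rmult_lt_0_compat; apply Gamma_pos; auto. apply Gamma_pos; lra.
Qed.

Lemma infsum_ext (f g : nat -> R) l : (forall n, f n = g n) -> infinite_sum f l -> infinite_sum g l.
Proof.
  intros H Hf. apply infsum_of_lim. apply (is_lim_seq_ext (fun n => sum_f_R0 f n)).
  intros n. apply sum_eq. auto. now apply lim_of_infsum.
Qed.

Lemma infsum_scal (f : nat -> R) l c : infinite_sum f l -> infinite_sum (fun n => c * f n) (c * l).
Proof.
  intros Hf. apply infsum_of_lim. apply (is_lim_seq_ext (fun n => c * sum_f_R0 f n)).
  intros n. rewrite scal_sum. apply sum_eq. intros; ring.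
  apply is_lim_seq_mult'. apply is_lim_seq_const. now apply lim_of_infsum.
Qed.

Lemma infsum_first (f : nat -> R) : (forall n, f (S n) = 0) -> infinite_sum f (f 0%nat).
Proof.
  intros H. apply infsum_of_lim. apply (is_lim_seq_ext (fun _ => f 0%nat)).
  - intros n. induction n. reflexivity. rewrite tech5, H, <- IHn. ring.
  - apply is_lim_seq_const.
Qed.

Lemma infsum_zero (f : nat -> R) : (forall n, f n = 0) -> infinite_sum f 0.
Proof.
  intros H. replace 0 with (f 0%nat) by auto. apply infsum_first. auto.
Qed.

Definition aK p q y z (k j : nat) := z ^ k / INR (fact k) * y ^ j * (poch (p + q) (k + j) / poch (p + 1) (k + j)).
Definition RK p q y z (k : nat) := z ^ k / INR (fact k) * (poch (p + q) k / poch (p + 1) k)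
   * ((p + INR k) * Jv q y (p + INR k) / phiJ q (p + INR k) y).

Lemma poch_p1 p k : p * poch (p + 1) k = poch p k * (p + INR k).
Proof. rewrite <- poch_shift. apply poch_S. Qed.

Lemma aK_sum p q y z k : 0 < p -> 0 < q -> 0 < y < 1 -> infinite_sum (aK p q y z k) (RK p q y z k).
Proof.
  intros Hp Hq Hy. pose proof (pos_INR k).
  assert (HS := J_series q y (p + INR k) Hq Hy ltac:(lra)).
  apply (infsum_scal _ _ (z ^ k / INR (fact k) * (poch (p + q) k / poch (p + 1) k))) in HS.
  unfold RK.
  eapply infsum_ext; [|exact HS]. intros j. unfold aK, cJ.
  rewrite !poch_add.
  replace (p + INR k + q) with (p + q + INR k) by ring.
  replace (p + INR k + 1) with (p + 1 + INR k) by ring.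
  pose proof (poch_pos (p + 1) k ltac:(lra)). pose proof (poch_pos (p + 1 + INR k) j ltac:(lra)).
  pose proof (INR_fact_lt_0 k).
  field. repeat split; lra.
Qed.

Lemma aK_nonneg p q y z k j : 0 < p -> 0 < q -> 0 <= y -> 0 <= z -> 0 <= aK p q y z k j.
Proof.
  intros Hp Hq Hy Hz. unfold aK. pose proof (INR_fact_lt_0 k).
  pose proof (poch_pos (p + q) (k + j) ltac:(lra)). pose proof (poch_pos (p + 1) (k + j) ltac:(lra)).
  apply Rmult_le_pos. apply Rmult_le_pos. apply Rdiv_le_0_compat; auto. apply pow_le; auto.
  apply pow_le; auto. left; apply Rdiv_lt_0_compat; auto.
Qed.

Lemma RK_nonneg p q y z k : 0 < p -> 0 < q -> 0 < y < 1 -> 0 <= z -> 0 <= RK p q y z k.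
Proof.
  intros Hp Hq Hy Hz. apply Rle_trans with (aK p q y z k 0). apply aK_nonneg; lra.
  apply (term_le_lim (aK p q y z k)). intros; apply aK_nonneg; lra. apply aK_sum; auto.
Qed.

Lemma RK_bound p q y z k : 0 < p -> 0 < q -> 0 < y < 1 -> 0 <= z ->
  RK p q y z k <= (p * Jv q y p / phiJ q p y) * ((1 + Rabs (p + q) / p) * z) ^ k / INR (fact k).
Proof.
  intros Hp Hq Hy Hz. unfold RK. pose proof (pos_INR k).
  set (A := 1 + Rabs (p + q) / p).
  pose proof (INR_fact_lt_0 k). pose proof (poch_pos p k Hp). pose proof (poch_pos (p + 1) k ltac:(lra)).
  pose proof (poch_pos (p + q) k ltac:(lra)). pose proof (phiJ_pos q p y).
  pose proof (pow_lt y k ltac:(lra)).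
  rewrite phiJ_shift by lra.
  assert (HJ := J_le q y p k Hq Hy Hp). assert (HJ0 := J_nonneg q y (p + INR k) Hq Hy ltac:(lra)).
  assert (Hpa := poch_abs_bound (p + q) p k Hp). rewrite Rabs_pos_eq in Hpa by (left; auto). fold A in Hpa.
  replace (poch (p + 1) k) with (poch p k * (p + INR k) / p) by (rewrite <- poch_p1; field; lra).
  rewrite Rpow_mult_distr.
  assert (E : z ^ k / INR (fact k) * (poch (p + q) k / (poch p k * (p + INR k) / p)) *
              ((p + INR k) * Jv q y (p + INR k) / (y ^ k * phiJ q p y))
           = (z ^ k / INR (fact k)) * (poch (p + q) k / poch p k) * (p / phiJ q p y) * (Jv q y (p + INR k) / y ^ k)).
  { field. repeat split; lra. }
  rewrite E. clear E.
  assert (E2 : p * Jv q y p / phiJ q p y * (A ^ k * z ^ k) / INR (fact k)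
            = (z ^ k / INR (fact k)) * A ^ k * (p / phiJ q p y) * Jv q y p).
  { field. repeat split; lra. }
  rewrite E2. clear E2.
  assert (Hz0 : 0 <= z ^ k / INR (fact k)) by (apply Rdiv_le_0_compat; auto; apply pow_le; auto).
  assert (Hpp : 0 < p / phiJ q p y) by (apply Rdiv_lt_0_compat; auto).
  assert (Hr : poch (p + q) k / poch p k <= A ^ k).
  { apply Rmult_le_reg_r with (poch p k); auto. unfold Rdiv. rewrite Rmult_assoc, Rinv_l by lra. lra. }
  assert (Hj : Jv q y (p + INR k) / y ^ k <= Jv q y p).
  { apply Rmult_le_reg_r with (y ^ k); auto. unfold Rdiv. rewrite Rmult_assoc, Rinv_l by lra. lra. }
  assert (0 <= Jv q y (p + INR k) / y ^ k) by (apply Rdiv_le_0_compat; auto).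
  assert (0 <= poch (p + q) k / poch p k) by (left; apply Rdiv_lt_0_compat; auto).
  apply Rmult_le_compat; try lra.
  - apply Rmult_le_pos; try lra. apply Rmult_le_pos; lra.
  - apply Rmult_le_compat_r; try lra. apply Rmult_le_compat_l; lra.
Qed.

Lemma RK_sum p q y z : 0 < p -> 0 < q -> 0 < y < 1 -> 0 <= z -> exists L, infinite_sum (RK p q y z) L.
Proof.
  intros Hp Hq Hy Hz.
  set (Cst := p * Jv q y p / phiJ q p y). set (A := 1 + Rabs (p + q) / p).
  assert (HCst : 0 <= Cst).
  { unfold Cst. apply Rdiv_le_0_compat. apply Rmult_le_pos; [lra| apply J_nonneg; auto]. apply phiJ_pos. }
  assert (HA : 0 <= A * z).
  { unfold A. apply Rmult_le_pos; auto. assert (0 <= Rabs (p + q) / p) by (apply Rdiv_le_0_compat; [apply Rabs_pos|lra]). lra. }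
  destruct (mono_bounded_sum (RK p q y z) (Cst * exp (A * z))) as [L [HL _]].
  - intros n. apply RK_nonneg; auto.
  - intros n. apply Rle_trans with (sum_f_R0 (fun k => Cst * ((A * z) ^ k / INR (fact k))) n).
    + apply sum_Rle. intros k _. eapply Rle_trans. apply RK_bound; auto. fold Cst A. unfold Rdiv. lra.
    + rewrite (sum_eq _ (fun k => (A * z) ^ k / INR (fact k) * Cst)) by (intros; ring). rewrite <- scal_sum. apply Rmult_le_compat_l; auto.
      apply psum_le_lim. intros k. apply Rdiv_le_0_compat. apply pow_le; auto. apply INR_fact_lt_0.
      apply exp_series_sum.
  - exists L; auto.
Qed.

Lemma term_eq p q x y k : 0 < p -> 0 < q -> 0 <= x -> 0 < y < 1 ->
  / INR (fact k) * (x / 2) ^ k * Ibeta y (p + INR k) q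
  = Rpower y p * Rpower (1 - y) q / (p * Beta p q) * RK p q y (x * y / 2) k.
Proof.
  intros Hp Hq Hx Hy. unfold Ibeta. destruct (Rle_dec y 0) as [Hc|_]; [lra|].
  change (the_real (improper_int (fun t : R => Rpower t (p + INR k - 1) * Rpower (1 - t) (q - 1)) 0 y)) with (Jv q y (p + INR k)). unfold RK.
  rewrite Beta_shift by auto. rewrite phiJ_shift by lra.
  replace (x * y / 2) with (x / 2 * y) by field. rewrite Rpow_mult_distr.
  pose proof (pos_INR k). pose proof (INR_fact_lt_0 k). pose proof (poch_pos p k Hp).
  pose proof (poch_pos (p + 1) k ltac:(lra)). pose proof (poch_pos (p + q) k ltac:(lra)).
  pose proof (Beta_pos p q Hp Hq). pose proof (pow_lt y k ltac:(lra)).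
  assert (Hphi : 0 < phiJ q p y) by apply phiJ_pos. unfold phiJ in Hphi |- *.
  replace (poch (p + 1) k) with (poch p k * (p + INR k) / p) by (rewrite <- poch_p1; field; lra).
  pose proof (Rpower_pos y p). pose proof (Rpower_pos (1 - y) q). field. repeat split; lra.
Qed.

Definition Ej p q (j : nat) (t : R) :=
  poch (p + q) j / poch (p + 1) j * kummerM (p + q + INR j) (p + 1 + INR j) t.

Lemma Ej_deriv_seq p q : 0 < p -> 0 < q -> deriv_seq (kummerM (p + q) (p + 1)) (Ej p q).
Proof.
  intros Hp Hq. split.
  - intros t. unfold Ej. simpl. rewrite !Rplus_0_r. field.
  - intros j t. apply is_derive_Reals. unfold Ej.
    pose proof (pos_INR j). pose proof (poch_pos (p + 1) j ltac:(lra)).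
    eapply is_derive_ext. { intros u. reflexivity. }
    replace (poch (p + q) (S j) / poch (p + 1) (S j) * kummerM (p + q + INR (S j)) (p + 1 + INR (S j)) t)
      with (poch (p + q) j / poch (p + 1) j * ((p + q + INR j) / (p + 1 + INR j) *
              kummerM (p + q + INR j + 1) (p + 1 + INR j + 1) t)).
    + apply is_derive_scalR. apply kummer_deriv. lra.
    + rewrite !poch_S, S_INR. replace (p + q + (INR j + 1)) with (p + q + INR j + 1) by ring.
      replace (p + 1 + (INR j + 1)) with (p + 1 + INR j + 1) by ring.
      field. split; lra.
Qed.

Lemma D_unique f D D' : deriv_seq f D -> deriv_seq f D' -> forall j t, D j t = D' j t.
Proof.
  intros [H0 H1] [H0' H1'] j. induction j as [|j IH]; intros t.
  - rewrite H0, H0'. auto.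
  - assert (E : D j = D' j) by (apply functional_extensionality; auto).
    specialize (H1 j t). rewrite E in H1.
    eapply uniqueness_limite; eauto.
Qed.

Lemma inner_series p q y z j : 0 < p -> 0 < q -> 0 <= y ->
  infinite_sum (fun k => aK p q y z k j)
    (y ^ j * (poch (p + q) j / poch (p + 1) j) * kummerM (p + q + INR j) (p + 1 + INR j) z).
Proof.
  intros Hp Hq Hy. pose proof (pos_INR j).
  assert (HS := kummer_sum (p + q + INR j) (p + 1 + INR j) z ltac:(lra)).
  apply (infsum_scal _ _ (y ^ j * (poch (p + q) j / poch (p + 1) j))) in HS.
  eapply infsum_ext; [|exact HS]. intros k. unfold aK.
  rewrite (Nat.add_comm k j), !poch_add.
  pose proof (poch_pos (p + 1) j ltac:(lra)). pose proof (poch_pos (p + 1 + INR j) k ltac:(lra)).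
  pose proof (INR_fact_lt_0 k).
  field. repeat split; lra.
Qed.

Theorem main_pos (p q x y : R) :
  0 < p -> 0 < q -> 0 <= x -> 0 < y < 1 ->
  let z := x * y / 2 in
  let K := rpow y p * rpow (1 - y) q / (p * Beta p q) in
  (exists L, infinite_sum
     (fun j => / INR (fact j) * (x / 2) ^ j * Ibeta y (p + INR j) q) L) /\
  (exists S, infinite_sum
     (fun j => y ^ j * (poch (p + q) j / poch (p + 1) j)
               * kummerM (p + q + INR j) (p + 1 + INR j) z) S /\
   ncbeta p q x y = exp (- x / 2) * K * S) /\
  (exists S, infinite_sum
     (fun j => y ^ j * (poch (p + q) j / poch (p + 1) j)
               * kummerM (1 - q) (p + 1 + INR j) (- z)) S /\
   ncbeta p q x y = exp (x * (y - 1) / 2) * K * S) /\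
  (exists D, deriv_seq (kummerM (p + q) (p + 1)) D) /\
  (forall D, deriv_seq (kummerM (p + q) (p + 1)) D ->
   exists S, infinite_sum (fun j => y ^ j * D j z) S /\
   ncbeta p q x y = exp (- x / 2) * K * S).
Proof.
  intros Hp Hq Hx Hy z K.
  assert (Hz : 0 <= z) by (unfold z; apply Rmult_le_pos; [apply Rmult_le_pos|]; lra).
  assert (HK : K = Rpower y p * Rpower (1 - y) q / (p * Beta p q)).
  { unfold K, rpow. destruct (Rle_dec y 0); [lra|]. destruct (Rle_dec (1 - y) 0); [lra|]. auto. }
  destruct (RK_sum p q y z Hp Hq Hy Hz) as [L HL].
  assert (Hterm : infinite_sum (fun j => / INR (fact j) * (x / 2) ^ j * Ibeta y (p + INR j) q) (K * L)).
  { apply infsum_scal with (c := K) in HL. eapply infsum_ext; [|exact HL].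
    intros j. rewrite HK. unfold z. symmetry. apply term_eq; auto. }
  assert (Hnc : ncbeta p q x y = exp (- x / 2) * K * L).
  { unfold ncbeta. rewrite (series_eq _ _ Hterm). ring. }
  destruct (fubini (aK p q y z) (RK p q y z) L) as [Hin Hout]; auto.
  { intros; apply aK_nonneg; lra. }
  { intros k; apply aK_sum; auto. }
  assert (Hinner : forall j, series (fun k => aK p q y z k j) =
     y ^ j * (poch (p + q) j / poch (p + 1) j) * kummerM (p + q + INR j) (p + 1 + INR j) z).
  { intros j. apply series_eq. apply inner_series; auto; lra. }
  assert (H1 : infinite_sum (fun j => y ^ j * (poch (p + q) j / poch (p + 1) j)
               * kummerM (p + q + INR j) (p + 1 + INR j) z) L).
  { eapply infsum_ext; [|exact Hout]. intros j. apply Hinner. }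
  split; [exists (K * L); auto|].
  split; [exists L; split; auto|].
  split.
  { exists (exp (- z) * L). split.
    - apply infsum_scal with (c := exp (- z)) in H1. eapply infsum_ext; [|exact H1].
      intros j. pose proof (pos_INR j).
      replace (1 - q) with ((p + 1 + INR j) - (p + q + INR j)) by ring.
      rewrite kummer_transform by lra. ring.
    - rewrite Hnc. replace (exp (- x / 2)) with (exp (x * (y - 1) / 2) * exp (- z)).
      ring. rewrite <- exp_plus. f_equal. unfold z. field. }
  split.
  { exists (Ej p q). now apply Ej_deriv_seq. }
  intros D HD. exists L. split; auto.
  eapply infsum_ext; [|exact H1]. intros j.
  rewrite (D_unique _ _ _ HD (Ej_deriv_seq p q Hp Hq)). unfold Ej. ring.
Qed.

Theorem mainTheorem9 (p q x y : R) :
  0 < p -> 0 < q -> 0 <= x -> 0 <= y < 1 ->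
  let z := x * y / 2 in
  let K := rpow y p * rpow (1 - y) q / (p * Beta p q) in
  (exists L, infinite_sum
     (fun j => / INR (fact j) * (x / 2) ^ j * Ibeta y (p + INR j) q) L) /\
  (exists S, infinite_sum
     (fun j => y ^ j * (poch (p + q) j / poch (p + 1) j)
               * kummerM (p + q + INR j) (p + 1 + INR j) z) S /\
   ncbeta p q x y = exp (- x / 2) * K * S) /\
  (exists S, infinite_sum
     (fun j => y ^ j * (poch (p + q) j / poch (p + 1) j)
               * kummerM (1 - q) (p + 1 + INR j) (- z)) S /\
   ncbeta p q x y = exp (x * (y - 1) / 2) * K * S) /\
  (exists D, deriv_seq (kummerM (p + q) (p + 1)) D) /\
  (forall D, deriv_seq (kummerM (p + q) (p + 1)) D ->
   exists S, infinite_sum (fun j => y ^ j * D j z) S /\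
   ncbeta p q x y = exp (- x / 2) * K * S).
Proof.
  intros Hp Hq Hx [Hy0 Hy1].
  destruct (Req_dec y 0) as [Hy|Hy]; [| apply main_pos; auto; lra].
  subst y. intros z K.
  assert (HK : K = 0).
  { unfold K, rpow. destruct (Rle_dec 0 0); [|lra]. unfold Rdiv. ring. }
  assert (HIb : forall a, Ibeta 0 a q = 0).
  { intros a. unfold Ibeta. destruct (Rle_dec 0 0); [auto|lra]. }
  assert (Hz0 : forall j, / INR (fact j) * (x / 2) ^ j * Ibeta 0 (p + INR j) q = 0).
  { intros j. rewrite HIb. ring. }
  assert (Hnc : ncbeta p q x 0 = 0).
  { unfold ncbeta. rewrite (series_eq _ 0 (infsum_zero _ Hz0)). ring. }
  split. { exists 0. now apply infsum_zero. }
  split. { eexists. split. apply infsum_first. intros n. simpl. ring.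
           rewrite Hnc, HK. ring. }
  split. { eexists. split. apply infsum_first. intros n. simpl. ring.
           rewrite Hnc, HK. ring. }
  split. { exists (Ej p q). now apply Ej_deriv_seq. }
  intros D HD. eexists. split. apply infsum_first. intros n. simpl. ring.
  rewrite Hnc, HK. ring.
Qed.
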